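(* Consider the system of ordinary differential equations for $(x(t),h(t),n(t))$: \[ \frac{dx}{dt} = x(1-x)S(h) + \mu(h)(1-x) - \nu x,\qquad \frac{dh}{dt} = \alpha n(1+\beta x)\,G(h) - \Gamma(n)(h-1),\qquad \frac{dn}{dt} = r n(1-n) - D(h,x)\,n, \] where \[ S(h) = \frac{s_0}{1+e^{-\lambda(h-h_c)}} - c + \varphi\, d_S(h),\quad d_S(h) = \frac{d_{\max} h^m}{h_{50}^m + h^m},\quad \mu(h)=\mu_0 h^p, \] \[ G(h) = \frac{K_g}{K_g+h},\quad \Gamma(n) = \frac{\gamma_0}{1+\eta n},\quad D(h,x) = (1-\varphi x)\,d_S(h), \] and all parameters $s_0,\lambda,h_c,c,\varphi,d_{\max},h_{50},m,\mu_0,p,\nu,\alpha,\beta,K_g,\gamma_0,\eta,r$ are positive. Let $x^*\in(0,1)$ be the unique solution in $(0,1)$ of $x(1-x)S(1) + \mu_0(1-x) - \nu x = 0$, so that $E_0 = (x^*,1,0)$ is an equilibrium of the system. Define $\mathcal{R}_0 = \dfrac{r}{D(1,x^* )}$. Then $E_0$ is locally asymptotically stable if $\mathcal{R}_0<1$ and unstable if $\mathcal{R}_0>1$.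
   Context: The model describes a tumor: $x$ is the fraction of acid-resistant cells, $h$ is the normalized proton concentration ($h=1$ physiological), $n$ is normalized tumor density. $E_0$ is the tumor-extinction equilibrium and $\mathcal{R}_0$ is called the basic reproduction number of the tumor cell population.
   Formalization: The death rate $D(1,x^* )$ is also assumed positive, that is $\varphi x^* < 1$. The statement above fails without it. *)

(* Defs.v *)
From Stdlib Require Import Reals.
From Coquelicot Require Import Coquelicot.
Open Scope R_scope.

Record params := Params {
  s0 : R; lam : R; hc : R; c : R; phi : R; dmax : R; h50 : R; m : R;
  mu0 : R; p : R; nu : R; alpha : R; beta : R; Kg : R; gamma0 : R;
  eta : R; r : R }.

Definition params_pos (P : params) : Prop :=
  0 < s0 P /\ 0 < lam P /\ 0 < hc P /\ 0 < c P /\ 0 < phi P /\ 0 < dmax P /\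
  0 < h50 P /\ 0 < m P /\ 0 < mu0 P /\ 0 < p P /\ 0 < nu P /\ 0 < alpha P /\
  0 < beta P /\ 0 < Kg P /\ 0 < gamma0 P /\ 0 < eta P /\ 0 < r P.

(* h^m, h^p with real exponents, via Rpower (meaningful for h > 0). *)
Definition dS (P : params) (h : R) : R :=
  dmax P * Rpower h (m P) / (Rpower (h50 P) (m P) + Rpower h (m P)).
Definition S (P : params) (h : R) : R :=
  s0 P / (1 + exp (- lam P * (h - hc P))) - c P + phi P * dS P h.
Definition mu (P : params) (h : R) : R := mu0 P * Rpower h (p P).
Definition G (P : params) (h : R) : R := Kg P / (Kg P + h).
Definition Gam (P : params) (n : R) : R := gamma0 P / (1 + eta P * n).
Definition Dfun (P : params) (h x : R) : R := (1 - phi P * x) * dS P h.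

Definition fx (P : params) (x h n : R) : R :=
  x * (1 - x) * S P h + mu P h * (1 - x) - nu P * x.
Definition fh (P : params) (x h n : R) : R :=
  alpha P * n * (1 + beta P * x) * G P h - Gam P n * (h - 1).
Definition fn (P : params) (x h n : R) : R :=
  r P * n * (1 - n) - Dfun P h x * n.

Definition Rnum0 (P : params) (xs : R) : R := r P / Dfun P 1 xs.

Definition dist3 (x h n xs hs ns : R) : R :=
  sqrt ((x - xs) ^ 2 + (h - hs) ^ 2 + (n - ns) ^ 2).

Definition sol_on (P : params) (T : R) (x h n : R -> R) : Prop :=
  forall t, 0 <= t < T ->
    is_derive x t (fx P (x t) (h t) (n t)) /\
    is_derive h t (fh P (x t) (h t) (n t)) /\
    is_derive n t (fn P (x t) (h t) (n t)).

Definition sol_global (P : params) (x h n : R -> R) : Prop :=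
  forall t, 0 <= t ->
    is_derive x t (fx P (x t) (h t) (n t)) /\
    is_derive h t (fh P (x t) (h t) (n t)) /\
    is_derive n t (fn P (x t) (h t) (n t)).

Definition lyap_stable (P : params) (xs hs ns : R) : Prop :=
  forall eps, 0 < eps -> exists delta, 0 < delta /\
    forall (T : R) (x h n : R -> R), sol_on P T x h n ->
      dist3 (x 0) (h 0) (n 0) xs hs ns < delta ->
      forall t, 0 <= t < T -> dist3 (x t) (h t) (n t) xs hs ns < eps.

Definition loc_attractive (P : params) (xs hs ns : R) : Prop :=
  exists delta, 0 < delta /\
    forall x0 h0 n0, dist3 x0 h0 n0 xs hs ns < delta ->
      (exists x h n : R -> R, sol_global P x h n /\
          x 0 = x0 /\ h 0 = h0 /\ n 0 = n0) /\
      (forall x h n : R -> R, sol_global P x h n ->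
          x 0 = x0 -> h 0 = h0 -> n 0 = n0 ->
          is_lim x p_infty xs /\ is_lim h p_infty hs /\ is_lim n p_infty ns).

Definition loc_asymp_stable (P : params) (xs hs ns : R) : Prop :=
  lyap_stable P xs hs ns /\ loc_attractive P xs hs ns.

Definition unstable (P : params) (xs hs ns : R) : Prop :=
  ~ lyap_stable P xs hs ns.

(* Main.v *)
Require Import Defs.
From Stdlib Require Import Reals Lra Lia Psatz Classical.
From Coquelicot Require Import Coquelicot.
Open Scope R_scope.

Lemma lip_cont (f : R -> R) (M x : R) : 0 <= M ->
  (forall t, Rabs (f t - f x) <= M * Rabs (t - x)) -> continuous f x.
Proof.
  intros HM H. apply continuity_pt_filterlim.
  intros eps Heps. exists (eps / (M + 1)). split.
  - apply Rdiv_lt_0_compat; lra.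
  - intros t [_ Ht]. simpl in Ht. unfold R_dist in *. 
    eapply Rle_lt_trans. apply H.
    apply Rle_lt_trans with ((M+1) * Rabs (t - x)).
    + apply Rmult_le_compat_r. apply Rabs_pos. lra.
    + apply Rmult_lt_reg_l with (/ (M+1)). apply Rinv_0_lt_compat; lra.
      rewrite <- Rmult_assoc, Rinv_l by lra. lra.
Qed.

Lemma RInt_swap' (g : R -> R) a b : ex_RInt g a b -> RInt g a b = - RInt g b a.
Proof. intros H. rewrite <- (opp_RInt_swap g a b H). unfold opp; simpl. rewrite Ropp_involutive. reflexivity. Qed.

Lemma RInt_bound_const (g : R -> R) a b B : ex_RInt g a b ->
  (forall s, Rmin a b <= s <= Rmax a b -> Rabs (g s) <= B) ->
  Rabs (RInt g a b) <= B * Rabs (b - a).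
Proof.
  intros Hex Hb. destruct (Rle_dec a b) as [Hab|Hab].
  - rewrite (Rabs_pos_eq (b - a)) by lra. rewrite Rmult_comm. apply abs_RInt_le_const; auto.
    intros t Ht; apply Hb; rewrite Rmin_left, Rmax_right; lra.
  - rewrite RInt_swap' by auto. rewrite Rabs_Ropp.
    rewrite (Rabs_left (b - a)) by lra. replace (- (b - a)) with (a - b) by ring.
    rewrite Rmult_comm. apply abs_RInt_le_const. lra. apply ex_RInt_swap; auto.
    intros t Ht; apply Hb; rewrite Rmin_right, Rmax_left; lra.
Qed.

Lemma RInt_bound_exp (g : R -> R) t B K : 0 < K -> ex_RInt g 0 t ->
  (forall s, Rmin 0 t <= s <= Rmax 0 t -> Rabs (g s) <= B * exp (K * Rabs s)) ->
  Rabs (RInt g 0 t) <= B * (exp (K * Rabs t) - 1) / K.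
Proof.
  intros HK Hex Hb. destruct (Rle_dec 0 t) as [Ht|Ht].
  - eapply Rle_trans. apply abs_RInt_le; auto.
    assert (Hi : is_RInt (fun s => B * exp (K * s)) 0 t (B * (exp (K * t) - 1) / K)).
    { replace (B * (exp (K * t) - 1) / K) with
        (minus ((fun s => B * exp (K * s) / K) t) ((fun s => B * exp (K * s) / K) 0)).
      2:{ unfold minus, plus, opp; simpl. rewrite Rmult_0_r, exp_0. field. lra. }
      apply (is_RInt_derive (fun s => B * exp (K * s) / K)).
      - intros x _. auto_derive; auto. field. lra.
      - intros x _. apply (@ex_derive_continuous R_AbsRing R_NormedModule). auto_derive. auto. }
    rewrite Rabs_pos_eq by lra. rewrite <- (is_RInt_unique _ _ _ _ Hi).
    apply RInt_le; auto. apply ex_RInt_norm; auto. eexists; eauto.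
    intros x Hx. unfold norm; simpl; unfold abs; simpl.
    specialize (Hb x). rewrite Rmin_left, Rmax_right in Hb by lra.
    rewrite (Rabs_pos_eq x) in Hb by lra. apply Hb; lra.
  - rewrite RInt_swap' by auto. rewrite Rabs_Ropp.
    eapply Rle_trans. apply abs_RInt_le. lra. apply ex_RInt_swap; auto.
    assert (Hi : is_RInt (fun s => B * exp (- K * s)) t 0 (B * (exp (K * - t) - 1) / K)).
    { replace (B * (exp (K * - t) - 1) / K) with
        (minus ((fun s => - B * exp (- K * s) / K) 0) ((fun s => - B * exp (- K * s) / K) t)).
      2:{ unfold minus, plus, opp; simpl. rewrite Rmult_0_r, exp_0.
          replace (-K * t) with (K * - t) by ring. field. lra. }
      apply (is_RInt_derive (fun s => - B * exp (- K * s) / K)).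
      - intros x _. auto_derive; auto. field. lra.
      - intros x _. apply (@ex_derive_continuous R_AbsRing R_NormedModule). auto_derive. auto. }
    rewrite Rabs_left by lra. rewrite <- (is_RInt_unique _ _ _ _ Hi).
    apply RInt_le. lra. apply ex_RInt_norm, ex_RInt_swap; auto. eexists; eauto.
    intros x Hx. unfold norm; simpl; unfold abs; simpl.
    specialize (Hb x). rewrite Rmin_right, Rmax_left in Hb by lra.
    rewrite (Rabs_left x) in Hb by lra. replace (-K * x) with (K * - x) by ring. apply Hb; lra.
Qed.

Lemma geom_seq (u : nat -> R) c : 0 <= c ->
  (forall k, Rabs (u (Datatypes.S k) - u k) <= c * (/2)^k) ->
  exists l : R, is_lim_seq u l /\ forall k, Rabs (l - u k) <= 2 * c * (/2)^k.
Proof.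
  intros Hc Hu.
  assert (Hj : forall k j, Rabs (u (j + k)%nat - u k) <= 2*c*((/2)^k - (/2)^(j+k))).
  { intros k j. induction j as [|j IH].
    - simpl. replace (u k - u k) with 0 by ring. rewrite Rabs_R0. lra.
    - replace (Datatypes.S j + k)%nat with (Datatypes.S (j + k)) by lia.
      replace (u (Datatypes.S (j + k)) - u k) with ((u (Datatypes.S (j+k)) - u (j+k)%nat) + (u (j+k)%nat - u k)) by ring.
      eapply Rle_trans. apply Rabs_triang.
      specialize (Hu (j+k)%nat). simpl (_ ^ Datatypes.S _). lra. }
  assert (Hj' : forall k j, Rabs (u (j + k)%nat - u k) <= 2*c*(/2)^k).
  { intros k j. eapply Rle_trans. apply Hj. 
    assert (0 <= (/2)^(j+k)) by (apply pow_le; lra). nra. }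
  assert (Hex : ex_finite_lim_seq u).
  { apply ex_lim_seq_cauchy_corr. intros eps.
    destruct (pow_lt_1_zero (/2)) with (y := eps / (4*c+1)) as [N HN].
    { rewrite Rabs_pos_eq; lra. }
    { apply Rdiv_lt_0_compat. destruct eps; simpl; lra. lra. }
    exists N. intros n m Hn Hm.
    specialize (HN N (le_n N)). rewrite Rabs_pos_eq in HN by (apply pow_le; lra).
    assert (H1 := Hj' N (n - N)%nat). assert (H2 := Hj' N (m - N)%nat).
    replace (n - N + N)%nat with n in H1 by lia. replace (m - N + N)%nat with m in H2 by lia.
    assert (Hp : 0 <= (/2)^N) by (apply pow_le; lra).
    assert (HH : (4*c+1) * (/2)^N < eps).
    { apply Rmult_lt_reg_l with (/(4*c+1)). apply Rinv_0_lt_compat; lra.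
      rewrite <- Rmult_assoc, Rinv_l by lra. unfold Rdiv in HN. lra. }
    replace (u n - u m) with ((u n - u N) - (u m - u N)) by ring.
    eapply Rle_lt_trans. apply Rabs_triang. rewrite Rabs_Ropp. nra. }
  destruct Hex as [l Hl]. exists l. split; auto.
  intros k. apply (is_lim_seq_incr_n _ k) in Hl.
  assert (A1 : Rbar_le l (u k + 2*c*(/2)^k)).
  { apply (is_lim_seq_le (fun n => u (n + k)%nat) (fun _ => u k + 2*c*(/2)^k)); auto.
    intros n. specialize (Hj' k n). apply Rabs_le_between' in Hj'. lra.
    apply is_lim_seq_const. }
  assert (A2 : Rbar_le (u k - 2*c*(/2)^k) l).
  { apply (is_lim_seq_le (fun _ => u k - 2*c*(/2)^k) (fun n => u (n + k)%nat)); auto.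
    intros n. specialize (Hj' k n). apply Rabs_le_between' in Hj'. lra.
    apply is_lim_seq_const. }
  simpl in A1, A2. apply Rabs_le_between'. split; [exact A2 | exact A1].
Qed.

Inductive idx := I1 | I2 | I3.
Definition nrm (u : idx -> R) := Rabs (u I1) + Rabs (u I2) + Rabs (u I3).

Lemma nrm_comp u i : Rabs (u i) <= nrm u.
Proof. unfold nrm; destruct i; generalize (Rabs_pos (u I1)) (Rabs_pos (u I2)) (Rabs_pos (u I3)); lra. Qed.

Lemma nrm_le u b : (forall i, Rabs (u i) <= b) -> nrm u <= 3 * b.
Proof. intros H; unfold nrm; generalize (H I1) (H I2) (H I3); lra. Qed.

Fixpoint pic (F : (idx -> R) -> idx -> R) (y : idx -> R) (k : nat) (t : R) (i : idx) : R :=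
  match k with O => y i | Datatypes.S k' => y i + RInt (fun s => F (pic F y k' s) i) 0 t end.

Lemma ex_RInt_all (g : R -> R) a b : (forall s, continuous g s) -> ex_RInt g a b.
Proof. intros H; apply (@ex_RInt_continuous R_CompleteNormedModule); intros; apply H. Qed.

Lemma RInt_diff (g : R -> R) a b : (forall s, continuous g s) ->
  RInt g 0 a - RInt g 0 b = RInt g b a.
Proof.
  intros H. rewrite <- (RInt_Chasles g b 0 a) by (apply ex_RInt_all; auto).
  rewrite (RInt_swap' g b 0) by (apply ex_RInt_all; auto).
  change (plus (- RInt g 0 b) (RInt g 0 a)) with (- RInt g 0 b + RInt g 0 a). ring.
Qed.

Lemma comp_cont (F : (idx -> R) -> idx -> R) L M (u : R -> idx -> R) i s :
  0 <= L -> 0 <= M ->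
  (forall u v i, Rabs (F u i - F v i) <= L * nrm (fun j => u j - v j)) ->
  (forall j t t', Rabs (u t j - u t' j) <= M * Rabs (t - t')) ->
  continuous (fun s => F (u s) i) s.
Proof.
  intros HL0 HM0 HL Hu. apply lip_cont with (M := L * (3 * M)). nra.
  intros t. eapply Rle_trans. apply HL. rewrite Rmult_assoc. apply Rmult_le_compat_l; auto.
  replace (3 * M * Rabs (t - s)) with (3 * (M * Rabs (t - s))) by ring.
  apply nrm_le. intros j. apply Hu.
Qed.

Lemma pic_lip F y L M : 0 <= L -> 0 <= M ->
  (forall u i, Rabs (F u i) <= M) ->
  (forall u v i, Rabs (F u i - F v i) <= L * nrm (fun j => u j - v j)) ->
  forall k i t t', Rabs (pic F y k t i - pic F y k t' i) <= M * Rabs (t - t').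
Proof.
  intros HL0 HM0 HM HL k. induction k as [|k IH]; intros i t t'; simpl.
  - replace (y i - y i) with 0 by ring. rewrite Rabs_R0. apply Rmult_le_pos; auto; apply Rabs_pos.
  - replace (y i + RInt (fun s => F (pic F y k s) i) 0 t - (y i + RInt (fun s => F (pic F y k s) i) 0 t'))
      with (RInt (fun s => F (pic F y k s) i) 0 t - RInt (fun s => F (pic F y k s) i) 0 t') by ring.
    rewrite RInt_diff. 2:{ intros s; apply (comp_cont F L M); auto. }
    eapply Rle_trans. apply RInt_bound_const. apply ex_RInt_all. intros s; apply (comp_cont F L M); auto.
    intros s _; apply HM. right; ring.
Qed.

Lemma RInt_minus' (f g : R -> R) a b : (forall s, continuous f s) -> (forall s, continuous g s) ->
  RInt f a b - RInt g a b = RInt (fun s => f s - g s) a b.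
Proof.
  intros Hf Hg. symmetry.
  exact (RInt_minus f g a b (ex_RInt_all f a b Hf) (ex_RInt_all g a b Hg)).
Qed.

Lemma Radd_sub_l (a b : R) : a + b - a = b.
Proof. ring. Qed.
Lemma Radd_sub_add (a b c : R) : a + b - (a + c) = b - c.
Proof. ring. Qed.
Lemma pic_S F y k t i : pic F y (Datatypes.S k) t i = y i + RInt (fun s => F (pic F y k s) i) 0 t.
Proof. reflexivity. Qed.

Lemma pic_diff F y L M : 0 < L -> 0 <= M ->
  (forall u i, Rabs (F u i) <= M) ->
  (forall u v i, Rabs (F u i - F v i) <= L * nrm (fun j => u j - v j)) ->
  forall k t, nrm (fun i => pic F y (Datatypes.S k) t i - pic F y k t i)
     <= (3 * M / (6 * L)) * (/2)^k * exp ((6 * L) * Rabs t).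
Proof.
  intros HL0 HM0 HM HL.
  assert (Hc : forall k i s, continuous (fun s => F (pic F y k s) i) s).
  { intros k i s. apply (comp_cont F L M); try lra; auto. apply pic_lip with L; try lra; auto. }
  induction k as [|k IH]; intros t.
  - simpl. replace (3 * M / (6 * L) * 1 * exp (6 * L * Rabs t)) with (3 * ((M / (6 * L)) * exp (6 * L * Rabs t))) by (field; lra).
    apply nrm_le. intros i. rewrite Radd_sub_l.
    eapply Rle_trans. apply RInt_bound_const. apply ex_RInt_all. intros; apply continuous_const.
    intros s _. apply HM. replace (t - 0) with t by ring.
    generalize (exp_ineq1_le (6 * L * Rabs t)) (Rabs_pos t); intros H1 H2.
    replace (M / (6 * L) * exp (6 * L * Rabs t)) with (M * (exp (6 * L * Rabs t) / (6 * L))) by (field; lra).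
    apply Rmult_le_compat_l; auto. apply Rmult_le_reg_r with (6 * L). lra.
    unfold Rdiv; rewrite Rmult_assoc, Rinv_l by lra. nra.
  - set (c := 3 * M / (6 * L)).
    assert (Hc0 : 0 <= c) by (unfold c; apply Rmult_le_pos; [lra| left; apply Rinv_0_lt_compat; lra]).
    replace (c * (/ 2) ^ Datatypes.S k * exp (6 * L * Rabs t)) with
      (3 * (L * (c * (/2)^k) * (exp (6 * L * Rabs t) - 1) / (6 * L)) + c * (/2)^(Datatypes.S k)) by (simpl; field; lra).
    assert (0 <= c * (/2)^(Datatypes.S k)) by (apply Rmult_le_pos; auto; apply pow_le; lra).
    cut (nrm (fun i : idx => pic F y (Datatypes.S (Datatypes.S k)) t i - pic F y (Datatypes.S k) t i) <=
      3 * (L * (c * (/ 2) ^ k) * (exp (6 * L * Rabs t) - 1) / (6 * L))). lra.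
    apply nrm_le. intros i. rewrite (pic_S F y (Datatypes.S k) t i).
    rewrite (pic_S F y k t i), Radd_sub_add.
    rewrite RInt_minus' by auto.
    apply RInt_bound_exp. lra. apply ex_RInt_all. intros s.
    apply (@continuous_minus R_UniformSpace R_AbsRing R_NormedModule); auto.
    intros s _. eapply Rle_trans. apply HL. rewrite Rmult_assoc. apply Rmult_le_compat_l. lra.
    apply IH.
Qed.

Definition sol F y (t : R) (i : idx) : R := real (Lim_seq (fun k => pic F y k t i)).

Lemma sol_spec F y L M : 0 < L -> 0 <= M ->
  (forall u i, Rabs (F u i) <= M) ->
  (forall u v i, Rabs (F u i - F v i) <= L * nrm (fun j => u j - v j)) ->
  forall t i, is_lim_seq (fun k => pic F y k t i) (sol F y t i) /\
    forall k, Rabs (sol F y t i - pic F y k t i) <=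
      2 * ((3 * M / (6 * L)) * exp ((6 * L) * Rabs t)) * (/2)^k.
Proof.
  intros HL0 HM0 HM HL t i.
  destruct (geom_seq (fun k => pic F y k t i) ((3 * M / (6 * L)) * exp ((6 * L) * Rabs t))) as [l [Hl Hb]].
  { apply Rmult_le_pos. apply Rmult_le_pos. lra. left; apply Rinv_0_lt_compat; lra. left; apply exp_pos. }
  { intros k. eapply Rle_trans. apply (nrm_comp (fun i => pic F y (Datatypes.S k) t i - pic F y k t i)).
    eapply Rle_trans. apply (pic_diff F y L M); auto. right; ring. }
  unfold sol. rewrite (is_lim_seq_unique _ _ Hl). simpl. split; auto.
Qed.

Lemma sol_lip F y L M : 0 < L -> 0 <= M ->
  (forall u i, Rabs (F u i) <= M) ->
  (forall u v i, Rabs (F u i - F v i) <= L * nrm (fun j => u j - v j)) ->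
  forall i t t', Rabs (sol F y t i - sol F y t' i) <= M * Rabs (t - t').
Proof.
  intros HL0 HM0 HM HL i t t'.
  destruct (sol_spec F y L M HL0 HM0 HM HL t i) as [H1 _].
  destruct (sol_spec F y L M HL0 HM0 HM HL t' i) as [H2 _].
  assert (H3 := is_lim_seq_minus' _ _ _ _ H1 H2).
  assert (Hb : forall k, Rabs (pic F y k t i - pic F y k t' i) <= M * Rabs (t - t')).
  { intros k; apply pic_lip with L; auto; lra. }
  assert (A1 : Rbar_le (sol F y t i - sol F y t' i) (M * Rabs (t - t'))).
  {
    apply (is_lim_seq_le (fun k => pic F y k t i - pic F y k t' i) (fun _ => M * Rabs (t - t')) _ _) ; [|exact H3|apply is_lim_seq_const].
    intros k. specialize (Hb k). apply Rabs_le_between in Hb. simpl. lra. }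
  assert (A2 : Rbar_le (- (M * Rabs (t - t'))) (sol F y t i - sol F y t' i)).
  { apply (is_lim_seq_le (fun _ => - (M * Rabs (t - t'))) (fun k => pic F y k t i - pic F y k t' i) _ _) ; [|apply is_lim_seq_const|exact H3].
    intros k. specialize (Hb k). apply Rabs_le_between in Hb. simpl. lra. }
  simpl in A1, A2. apply Rabs_le_between. split; [exact A2|exact A1].
Qed.

Lemma exp_mono a b : a <= b -> exp a <= exp b.
Proof. intros [H|H]. left; apply exp_increasing; auto. subst; lra. Qed.

Lemma geom_lim D : is_lim_seq (fun k => D * (/2)^k) 0.
Proof.
  replace 0 with (D * 0) by ring.
  apply is_lim_seq_mult'. apply is_lim_seq_const. apply is_lim_seq_geom.
  rewrite Rabs_pos_eq; lra.
Qed.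

Lemma sol_int F y L M : 0 < L -> 0 <= M ->
  (forall u i, Rabs (F u i) <= M) ->
  (forall u v i, Rabs (F u i - F v i) <= L * nrm (fun j => u j - v j)) ->
  forall t i, sol F y t i = y i + RInt (fun s => F (sol F y s) i) 0 t.
Proof.
  intros HL0 HM0 HM HL t i.
  set (c := 3 * M / (6 * L)). set (E := exp (6 * L * Rabs t)).
  assert (Hc0 : 0 <= c) by (unfold c; apply Rmult_le_pos; [lra| left; apply Rinv_0_lt_compat; lra]).
  assert (HE : 0 < E) by apply exp_pos.
  assert (Hcs : forall s, continuous (fun s => F (sol F y s) i) s).
  { intros s. apply (comp_cont F L M); try lra; auto. intros j; apply sol_lip with L; auto. }
  assert (Hcp : forall k s, continuous (fun s => F (pic F y k s) i) s).
  { intros k s. apply (comp_cont F L M); try lra; auto. intros j; apply pic_lip with L; auto; lra. }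
  set (D := L * (3 * (2 * (c * E))) * Rabs t).
  assert (Hb : forall k, Rabs ((y i + RInt (fun s => F (pic F y k s) i) 0 t) -
                               (y i + RInt (fun s => F (sol F y s) i) 0 t)) <= D * (/2)^k).
  { intros k. rewrite Radd_sub_add, RInt_minus' by auto.
    eapply Rle_trans. apply RInt_bound_const with (B := L * (3 * (2 * (c * E) * (/2)^k))).
    apply ex_RInt_all. intros s. apply (@continuous_minus R_UniformSpace R_AbsRing R_NormedModule); auto.
    intros s Hs. eapply Rle_trans. apply HL. apply Rmult_le_compat_l. lra.
    apply nrm_le. intros j. destruct (sol_spec F y L M HL0 HM0 HM HL s j) as [_ Hk].
    specialize (Hk k). rewrite Rabs_minus_sym. eapply Rle_trans. apply Hk.
    apply Rmult_le_compat_r. apply pow_le; lra. apply Rmult_le_compat_l. lra.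
    apply Rmult_le_compat_l. auto. unfold E. apply exp_mono. apply Rmult_le_compat_l. lra.
    unfold Rmin, Rmax in Hs. destruct (Rle_dec 0 t); unfold Rabs; destruct (Rcase_abs s); destruct (Rcase_abs t); lra.
    right. unfold D. replace (t - 0) with t by ring. ring. }
  assert (Hv : is_lim_seq (fun k => y i + RInt (fun s => F (pic F y k s) i) 0 t)
                 (y i + RInt (fun s => F (sol F y s) i) 0 t)).
  { apply is_lim_seq_le_le with (u := fun k => (y i + RInt (fun s => F (sol F y s) i) 0 t) - D * (/2)^k)
      (w := fun k => (y i + RInt (fun s => F (sol F y s) i) 0 t) + D * (/2)^k).
    - intros k. specialize (Hb k). apply Rabs_le_between' in Hb. lra.
    - replace (Finite (y i + RInt (fun s => F (sol F y s) i) 0 t)) with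
        (Finite ((y i + RInt (fun s => F (sol F y s) i) 0 t) - 0)) by (f_equal; ring).
      apply is_lim_seq_minus'. apply is_lim_seq_const. apply geom_lim.
    - replace (Finite (y i + RInt (fun s => F (sol F y s) i) 0 t)) with
        (Finite ((y i + RInt (fun s => F (sol F y s) i) 0 t) + 0)) by (f_equal; ring).
      apply is_lim_seq_plus'. apply is_lim_seq_const. apply geom_lim. }
  destruct (sol_spec F y L M HL0 HM0 HM HL t i) as [Hs _].
  apply is_lim_seq_incr_1 in Hs.
  apply is_lim_seq_unique in Hs. apply is_lim_seq_unique in Hv.
  simpl in Hs. rewrite Hs in Hv. injection Hv; auto.
Qed.

Lemma sol_deriv F y L M : 0 < L -> 0 <= M ->
  (forall u i, Rabs (F u i) <= M) ->
  (forall u v i, Rabs (F u i - F v i) <= L * nrm (fun j => u j - v j)) ->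
  forall t i, is_derive (fun t => sol F y t i) t (F (sol F y t) i).
Proof.
  intros HL0 HM0 HM HL t i.
  assert (Hcs : forall s, continuous (fun s => F (sol F y s) i) s).
  { intros s. apply (comp_cont F L M); try lra; auto. intros j; apply sol_lip with L; auto. }
  apply is_derive_ext with (f := fun t => y i + RInt (fun s => F (sol F y s) i) 0 t).
  { intros u. symmetry. apply sol_int with L M; auto. }
  replace (F (sol F y t) i) with (plus zero (F (sol F y t) i)).
  2:{ rewrite plus_zero_l. reflexivity. }
  apply (is_derive_plus (fun _ => y i)). apply (@is_derive_const R_AbsRing R_NormedModule).
  apply (is_derive_RInt (fun s => F (sol F y s) i) (fun b => RInt (fun s => F (sol F y s) i) 0 b) 0 t).
  apply filter_forall. intros b. apply (RInt_correct (V := R_CompleteNormedModule)). apply ex_RInt_all; auto.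
  apply Hcs.
Qed.

Lemma exist3 (F1 F2 F3 : R -> R -> R -> R) M L : 0 < L -> 0 <= M ->
  (forall a b c, Rabs (F1 a b c) <= M) ->
  (forall a b c, Rabs (F2 a b c) <= M) ->
  (forall a b c, Rabs (F3 a b c) <= M) ->
  (forall a b c a' b' c', Rabs (F1 a b c - F1 a' b' c') <= L * (Rabs (a - a') + Rabs (b - b') + Rabs (c - c'))) ->
  (forall a b c a' b' c', Rabs (F2 a b c - F2 a' b' c') <= L * (Rabs (a - a') + Rabs (b - b') + Rabs (c - c'))) ->
  (forall a b c a' b' c', Rabs (F3 a b c - F3 a' b' c') <= L * (Rabs (a - a') + Rabs (b - b') + Rabs (c - c'))) ->
  forall y1 y2 y3, exists x h n : R -> R, x 0 = y1 /\ h 0 = y2 /\ n 0 = y3 /\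
    forall t, is_derive x t (F1 (x t) (h t) (n t)) /\ is_derive h t (F2 (x t) (h t) (n t)) /\
              is_derive n t (F3 (x t) (h t) (n t)).
Proof.
  intros HL0 HM0 B1 B2 B3 L1 L2 L3 y1 y2 y3.
  set (F := fun (u : idx -> R) (i : idx) => match i with
         | I1 => F1 (u I1) (u I2) (u I3) | I2 => F2 (u I1) (u I2) (u I3) | I3 => F3 (u I1) (u I2) (u I3) end).
  set (y := fun i : idx => match i with I1 => y1 | I2 => y2 | I3 => y3 end).
  assert (HM : forall u i, Rabs (F u i) <= M) by (intros u i; destruct i; simpl; auto).
  assert (HL : forall u v i, Rabs (F u i - F v i) <= L * nrm (fun j => u j - v j))
    by (intros u v i; destruct i; simpl; unfold nrm; auto).
  exists (fun t => sol F y t I1), (fun t => sol F y t I2), (fun t => sol F y t I3).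
  assert (H0 : forall i, sol F y 0 i = y i).
  { intros i. rewrite (sol_int F y L M) by auto. rewrite RInt_point. unfold zero; simpl. ring. }
  split; [|split; [|split]]; try apply H0.
  intros t. split; [|split].
  - apply (sol_deriv F y L M HL0 HM0 HM HL t I1).
  - apply (sol_deriv F y L M HL0 HM0 HM HL t I2).
  - apply (sol_deriv F y L M HL0 HM0 HM HL t I3).
Qed.

Definition box (l1 u1 l2 u2 l3 u3 : R) (a b c : R) : Prop :=
  l1 <= a <= u1 /\ l2 <= b <= u2 /\ l3 <= c <= u3.

Definition LB (Bx : R -> R -> R -> Prop) (f : R -> R -> R -> R) : Prop :=
  exists K Mb, 0 <= K /\ (forall a b c, Bx a b c -> Rabs (f a b c) <= Mb) /\
   (forall a b c a' b' c', Bx a b c -> Bx a' b' c' ->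
      Rabs (f a b c - f a' b' c') <= K * (Rabs (a - a') + Rabs (b - b') + Rabs (c - c'))).

Lemma dpos a b c a' b' c' : 0 <= Rabs (a - a') + Rabs (b - b') + Rabs (c - c').
Proof. generalize (Rabs_pos (a - a')) (Rabs_pos (b - b')) (Rabs_pos (c - c')); lra. Qed.

Lemma LB_const Bx k : LB Bx (fun _ _ _ => k).
Proof.
  exists 0, (Rabs k). split; [lra|split]. intros; lra.
  intros. replace (k - k) with 0 by ring. rewrite Rabs_R0. rewrite Rmult_0_l; lra.
Qed.

Lemma Rabs_bnd l u z : l <= z <= u -> Rabs z <= Rabs l + Rabs u.
Proof. intros. unfold Rabs; repeat destruct Rcase_abs; lra. Qed.

Lemma LB_p1 l1 u1 l2 u2 l3 u3 : LB (box l1 u1 l2 u2 l3 u3) (fun a _ _ => a).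
Proof.
  exists 1, (Rabs l1 + Rabs u1). split; [lra|split].
  intros a b c [H _]. apply Rabs_bnd; auto.
  intros. generalize (Rabs_pos (b - b')) (Rabs_pos (c - c')); lra.
Qed.
Lemma LB_p2 l1 u1 l2 u2 l3 u3 : LB (box l1 u1 l2 u2 l3 u3) (fun _ b _ => b).
Proof.
  exists 1, (Rabs l2 + Rabs u2). split; [lra|split].
  intros a b c [_ [H _]]. apply Rabs_bnd; auto.
  intros. generalize (Rabs_pos (a - a')) (Rabs_pos (c - c')); lra.
Qed.
Lemma LB_p3 l1 u1 l2 u2 l3 u3 : LB (box l1 u1 l2 u2 l3 u3) (fun _ _ c => c).
Proof.
  exists 1, (Rabs l3 + Rabs u3). split; [lra|split].
  intros a b c [_ [_ H]]. apply Rabs_bnd; auto.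
  intros. generalize (Rabs_pos (a - a')) (Rabs_pos (b - b')); lra.
Qed.

Lemma LB_plus Bx f g : LB Bx f -> LB Bx g -> LB Bx (fun a b c => f a b c + g a b c).
Proof.
  intros [K1 [M1 [HK1 [Hb1 Hl1]]]] [K2 [M2 [HK2 [Hb2 Hl2]]]].
  exists (K1 + K2), (M1 + M2). split; [lra|split].
  intros a b c H. eapply Rle_trans. apply Rabs_triang. generalize (Hb1 a b c H) (Hb2 a b c H); lra.
  intros a b c a' b' c' H H'.
  replace (f a b c + g a b c - (f a' b' c' + g a' b' c')) with ((f a b c - f a' b' c') + (g a b c - g a' b' c')) by ring.
  eapply Rle_trans. apply Rabs_triang. generalize (Hl1 a b c a' b' c' H H') (Hl2 a b c a' b' c' H H'); lra.
Qed.

Lemma LB_opp Bx f : LB Bx f -> LB Bx (fun a b c => - f a b c).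
Proof.
  intros [K1 [M1 [HK1 [Hb1 Hl1]]]]. exists K1, M1. split; [lra|split].
  intros a b c H. rewrite Rabs_Ropp. auto.
  intros. replace (- f a b c - - f a' b' c') with (- (f a b c - f a' b' c')) by ring.
  rewrite Rabs_Ropp. auto.
Qed.

Lemma LB_minus Bx f g : LB Bx f -> LB Bx g -> LB Bx (fun a b c => f a b c - g a b c).
Proof. intros. apply (LB_plus Bx f (fun a b c => - g a b c)); auto. apply LB_opp; auto. Qed.

Lemma LB_mult Bx f g : LB Bx f -> LB Bx g -> LB Bx (fun a b c => f a b c * g a b c).
Proof.
  intros [K1 [M1 [HK1 [Hb1 Hl1]]]] [K2 [M2 [HK2 [Hb2 Hl2]]]].
  exists (Rabs M1 * K2 + Rabs M2 * K1), (M1 * M2). split.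
  { generalize (Rabs_pos M1) (Rabs_pos M2); nra. } split.
  intros a b c H. rewrite Rabs_mult. generalize (Hb1 a b c H) (Hb2 a b c H) (Rabs_pos (f a b c)) (Rabs_pos (g a b c)); nra.
  intros a b c a' b' c' H H'.
  replace (f a b c * g a b c - f a' b' c' * g a' b' c') with
    (f a b c * (g a b c - g a' b' c') + g a' b' c' * (f a b c - f a' b' c')) by ring.
  eapply Rle_trans. apply Rabs_triang. rewrite !Rabs_mult.
  generalize (Hb1 a b c H) (Hb2 a' b' c' H') (Hl1 a b c a' b' c' H H') (Hl2 a b c a' b' c' H H')
    (Rabs_pos (f a b c)) (Rabs_pos (g a' b' c')) (Rabs_pos (g a b c - g a' b' c')) (Rabs_pos (f a b c - f a' b' c'))
    (dpos a b c a' b' c') (Rabs_pos M1) (Rabs_pos M2) (Rle_abs M1) (Rle_abs M2).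
  set (d := Rabs (a - a') + Rabs (b - b') + Rabs (c - c')). intros. 
  apply Rle_trans with (Rabs M1 * (K2 * d) + Rabs M2 * (K1 * d)).
  apply Rplus_le_compat; apply Rmult_le_compat; try apply Rabs_pos; lra.
  right; ring.
Qed.

Lemma LB_inv Bx f m : 0 < m -> LB Bx f -> (forall a b c, Bx a b c -> m <= f a b c) ->
  LB Bx (fun a b c => / f a b c).
Proof.
  intros Hm [K1 [M1 [HK1 [Hb1 Hl1]]]] Hlow.
  exists (K1 / (m * m)), (/ m). split. apply Rmult_le_pos; auto. left; apply Rinv_0_lt_compat; nra. split.
  intros a b c H. specialize (Hlow a b c H). rewrite Rabs_pos_eq.
  apply Rinv_le_contravar; lra. left; apply Rinv_0_lt_compat; lra.
  intros a b c a' b' c' H H'. specialize (Hlow a b c H) as H1. specialize (Hlow a' b' c' H') as H2.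
  replace (/ f a b c - / f a' b' c') with ((f a' b' c' - f a b c) / (f a b c * f a' b' c')) by (field; lra).
  unfold Rdiv. rewrite Rabs_mult, Rabs_minus_sym. rewrite (Rabs_pos_eq (/ _)).
  2:{ left; apply Rinv_0_lt_compat; nra. }
  apply Rle_trans with ((K1 * (Rabs (a - a') + Rabs (b - b') + Rabs (c - c'))) * / (m * m)).
  apply Rmult_le_compat; auto. apply Rabs_pos. left; apply Rinv_0_lt_compat; nra.
  apply Rinv_le_contravar. nra. apply Rmult_le_compat; lra.
  right; field; lra.
Qed.

Lemma exp_lip a b : Rabs (exp a - exp b) <= exp (Rmax a b) * Rabs (a - b).
Proof.
  destruct (Rle_dec a b) as [H|H].
  - rewrite Rmax_right by auto. rewrite Rabs_minus_sym, (Rabs_minus_sym a).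
    assert (exp a <= exp b) by (destruct H as [H|H]; [left; apply exp_increasing; auto| subst; lra]).
    rewrite !Rabs_pos_eq by lra.
    generalize (exp_ineq1_le (a - b)). intros H1.
    assert (Hb : 0 < exp b) by apply exp_pos.
    replace (exp a) with (exp b * exp (a - b)) by (rewrite <- exp_plus; f_equal; ring). nra.
  - rewrite Rmax_left by lra.
    assert (exp b <= exp a) by (left; apply exp_increasing; lra).
    rewrite !Rabs_pos_eq by lra.
    generalize (exp_ineq1_le (b - a)). intros H1.
    assert (Hb : 0 < exp a) by apply exp_pos.
    replace (exp b) with (exp a * exp (b - a)) by (rewrite <- exp_plus; f_equal; ring). nra.
Qed.

Lemma exp_mono' a b : a <= b -> exp a <= exp b.
Proof. intros [H|H]. left; apply exp_increasing; auto. subst; lra. Qed.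

Lemma LB_exp Bx f : LB Bx f -> LB Bx (fun a b c => exp (f a b c)).
Proof.
  intros [K1 [M1 [HK1 [Hb1 Hl1]]]].
  exists (exp M1 * K1), (exp M1). split. apply Rmult_le_pos; auto; left; apply exp_pos. split.
  intros a b c H. rewrite Rabs_pos_eq by (left; apply exp_pos). apply exp_mono'.
  generalize (Hb1 a b c H) (Rle_abs (f a b c)); lra.
  intros a b c a' b' c' H H'. eapply Rle_trans. apply exp_lip. rewrite Rmult_assoc.
  apply Rmult_le_compat. left; apply exp_pos. apply Rabs_pos.
  apply exp_mono'. generalize (Hb1 a b c H) (Rle_abs (f a b c)) (Hb1 a' b' c' H') (Rle_abs (f a' b' c')).
  unfold Rmax; destruct Rle_dec; lra. auto.
Qed.

Lemma ln_le_sub1 x : 0 < x -> ln x <= x - 1.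
Proof. intros H. generalize (exp_ineq1_le (ln x)). rewrite exp_ln by auto. lra. Qed.

Lemma ln_lip m u v : 0 < m -> m <= u -> m <= v -> Rabs (ln u - ln v) <= Rabs (u - v) / m.
Proof.
  intros Hm Hu Hv. destruct (Rle_dec u v) as [H|H].
  - assert (ln u <= ln v) by (apply ln_le; lra).
    rewrite Rabs_minus_sym, (Rabs_minus_sym u). rewrite !Rabs_pos_eq by lra.
    rewrite <- ln_div by lra. eapply Rle_trans. apply ln_le_sub1. apply Rdiv_lt_0_compat; lra.
    replace (v / u - 1) with ((v - u) / u) by (field; lra).
    unfold Rdiv. apply Rmult_le_compat_l. lra. apply Rinv_le_contravar; lra.
  - assert (ln v <= ln u) by (apply ln_le; lra).
    rewrite !Rabs_pos_eq by lra.
    rewrite <- ln_div by lra. eapply Rle_trans. apply ln_le_sub1. apply Rdiv_lt_0_compat; lra.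
    replace (u / v - 1) with ((u - v) / v) by (field; lra).
    unfold Rdiv. apply Rmult_le_compat_l. lra. apply Rinv_le_contravar; lra.
Qed.

Lemma LB_ln Bx f m : 0 < m -> LB Bx f -> (forall a b c, Bx a b c -> m <= f a b c) ->
  LB Bx (fun a b c => ln (f a b c)).
Proof.
  intros Hm [K1 [M1 [HK1 [Hb1 Hl1]]]] Hlow.
  exists (K1 / m), ((M1 + m) / m + Rabs (ln m)). split. apply Rmult_le_pos; auto. left; apply Rinv_0_lt_compat; lra. split.
  intros a b c H. replace (ln (f a b c)) with ((ln (f a b c) - ln m) + ln m) by ring.
  eapply Rle_trans. apply Rabs_triang. apply Rplus_le_compat_r.
  eapply Rle_trans. apply ln_lip; auto; lra. unfold Rdiv. apply Rmult_le_compat_r.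
  left; apply Rinv_0_lt_compat; lra. eapply Rle_trans. apply Rabs_triang. rewrite Rabs_Ropp, (Rabs_pos_eq m) by lra.
  generalize (Hb1 a b c H); lra.
  intros a b c a' b' c' H H'. eapply Rle_trans. apply (ln_lip m); [lra | apply Hlow; auto | apply Hlow; auto].
  unfold Rdiv. replace (K1 * / m * (Rabs (a - a') + Rabs (b - b') + Rabs (c - c'))) with (K1 * (Rabs (a - a') + Rabs (b - b') + Rabs (c - c')) * / m) by ring.
  apply Rmult_le_compat_r. left; apply Rinv_0_lt_compat; lra. auto.
Qed.

Lemma LB_Rpower Bx f e m : 0 < m -> LB Bx f -> (forall a b c, Bx a b c -> m <= f a b c) ->
  LB Bx (fun a b c => Rpower (f a b c) e).
Proof.
  intros. unfold Rpower. apply (LB_exp Bx (fun a b c => e * ln (f a b c))).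
  apply (LB_mult Bx (fun _ _ _ => e)). apply LB_const. apply LB_ln with m; auto.
Qed.

Lemma LB_ext Bx f g : LB Bx f -> (forall a b c, Bx a b c -> f a b c = g a b c) -> LB Bx g.
Proof.
  intros [K1 [M1 [HK1 [Hb1 Hl1]]]] He. exists K1, M1. split; auto. split.
  intros. rewrite <- He; auto.
  intros. rewrite <- !He; auto.
Qed.

Lemma cont_eps (g : R -> R) s e : continuous g s -> 0 < e ->
  exists d, 0 < d /\ forall t, Rabs (t - s) < d -> Rabs (g t - g s) < e.
Proof.
  intros Hc He. apply continuity_pt_filterlim in Hc.
  destruct (Hc e He) as [d [Hd H]]. exists d. split; auto.
  intros t Ht. destruct (Req_dec t s) as [E|E].
  - subst. replace (g s - g s) with 0 by ring. rewrite Rabs_R0; auto.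
  - apply H. split. split. exact I. intro Es; apply E; auto. apply Ht.
Qed.

Lemma barrier (g : R -> R) (T th : R) :
  (forall t, 0 <= t < T -> continuous g t) -> g 0 < th ->
  (forall s, 0 < s < T -> (forall t, 0 <= t < s -> g t < th) -> g s < th) ->
  forall t, 0 <= t < T -> g t < th.
Proof.
  intros Hc H0 Hs t0 Ht0. destruct (Rlt_dec (g t0) th) as [|Hn]; auto. exfalso.
  set (E := fun s => 0 <= s <= t0 /\ forall t, 0 <= t <= s -> g t < th).
  destruct (completeness E) as [sg [Hub Hlub]].
  { exists t0. intros s [Hs' _]. lra. }
  { exists 0. split. lra. intros t Ht. replace t with 0 by lra. auto. }
  assert (Hsg0 : 0 <= sg) by (apply Hub; split; [lra|intros t Ht; replace t with 0 by lra; auto]).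
  assert (Hsgt : sg <= t0) by (apply Hlub; intros s [Hs' _]; lra).
  assert (C1 : forall t, 0 <= t < sg -> g t < th).
  { intros t Ht. destruct (Rlt_dec t sg) as [_|]; [|lra].
    destruct (Classical_Prop.classic (exists s, E s /\ t < s)) as [[s [[Hs1 Hs2] Hts]]|Hne].
    - apply Hs2; lra.
    - exfalso. assert (Hu : is_upper_bound E t).
      { intros s Es. destruct (Rle_dec s t); auto. exfalso; apply Hne; exists s; split; auto; lra. }
      specialize (Hlub t Hu). lra. }
  assert (C2 : g sg < th).
  { destruct (Req_dec sg 0) as [E0|E0]. rewrite E0; auto. apply Hs. lra. auto. }
  assert (Hlt : sg < t0) by (destruct (Req_dec sg t0) as [E1|E1]; [rewrite E1 in C2; lra| lra]).
  destruct (cont_eps g sg (th - g sg)) as [d [Hd Hdd]]. apply Hc; lra. lra.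
  set (s' := Rmin (sg + d/2) t0).
  assert (Es' : E s').
  { split. unfold s', Rmin; destruct Rle_dec; lra.
    intros t Ht. destruct (Rlt_dec t sg). apply C1; lra.
    destruct (Req_dec t sg) as [->|]. auto.
    assert (Rabs (t - sg) < d) by (unfold s', Rmin in Ht; destruct Rle_dec in Ht; rewrite Rabs_pos_eq; lra).
    specialize (Hdd t H1). apply Rabs_lt_between' in Hdd. lra. }
  specialize (Hub s' Es'). unfold s', Rmin in Hub; destruct Rle_dec in Hub; lra.
Qed.

Lemma cont_pt (f : R -> R) x : continuous f x -> continuity_pt f x.
Proof. intros; apply continuity_pt_filterlim; auto. Qed.

Lemma mono_dec (f df : R -> R) a b : a <= b ->
  (forall t, a <= t <= b -> is_derive f t (df t) /\ df t <= 0) -> f b <= f a.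
Proof.
  intros Hab Hd. destruct (MVT_gen f a b df) as [c0 [Hc0 Heq]].
  - rewrite Rmin_left, Rmax_right by lra. intros; apply Hd; lra.
  - rewrite Rmin_left, Rmax_right by lra. intros; apply cont_pt.
    apply (@ex_derive_continuous R_AbsRing R_NormedModule). eexists; apply Hd; auto.
  - rewrite Rmin_left, Rmax_right in Hc0 by lra.
    destruct (Hd c0 Hc0) as [_ H]. nra.
Qed.

Lemma le_at_end (g : R -> R) s K : 0 < s -> continuous g s ->
  (forall t, 0 <= t < s -> g t <= K) -> g s <= K.
Proof.
  intros Hs Hc H. destruct (Rle_dec (g s) K) as [|Hn]; auto. exfalso.
  destruct (cont_eps g s (g s - K)) as [d [Hd Hdd]]; auto. lra.
  set (t := Rmax 0 (s - d/2)).
  assert (Ht : 0 <= t < s) by (unfold t, Rmax; destruct Rle_dec; lra).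
  assert (Rabs (t - s) < d) by (unfold t, Rmax; destruct Rle_dec; rewrite Rabs_left; lra).
  specialize (Hdd t H0). specialize (H t Ht). apply Rabs_lt_between' in Hdd. lra.
Qed.

Lemma mono_dec' (f : R -> R) a b : a <= b ->
  (forall t, a <= t <= b -> exists dp, is_derive f t dp /\ dp <= 0) -> f b <= f a.
Proof.
  intros Hab Hd. apply (mono_dec f (Derive f)); auto.
  intros t Ht. destruct (Hd t Ht) as [dp [H1 H2]].
  rewrite (is_derive_unique _ _ _ H1). auto.
Qed.

Lemma amgm a b k : 0 < k -> a * b <= (k/2) * a^2 + (1/(2*k)) * b^2.
Proof.
  intros Hk. assert (H : 0 <= (k/2) * (a - b/k)^2) by (apply Rmult_le_pos; [lra| apply pow2_ge_0]).
  replace ((k/2) * a^2 + (1/(2*k)) * b^2) with ((k/2) * (a - b/k)^2 + a * b) by (field; lra). lra.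
Qed.

Lemma lyap_alg u v w du dv dw a0 g k Kx C1 B A :
  0 < a0 -> 0 < g -> 0 < k -> 0 <= Kx -> 0 <= C1 -> 1 <= B -> 1 <= A ->
  Kx^2 / (2*a0) <= B * g / 4 -> B * C1^2 / (2*g) <= A * k / 2 ->
  u * du <= - a0 * u^2 + Kx * (Rabs u * Rabs v) ->
  v * dv <= C1 * (Rabs w * Rabs v) - g * v^2 ->
  w * dw <= - k * w^2 ->
  2 * (u * du + B * (v * dv) + A * (w * dw)) <=
    - Rmin a0 (Rmin (g/2) k) * (u^2 + B * v^2 + A * w^2).
Proof.
  intros Ha Hg Hk HK HC HB HA H1 H2 H3 H4 H5.
  set (c := Rmin a0 (Rmin (g/2) k)).
  assert (Hc1 : c <= a0) by apply Rmin_l.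
  assert (Hc2 : c <= g/2) by (eapply Rle_trans; [apply Rmin_r| apply Rmin_l]).
  assert (Hc3 : c <= k) by (eapply Rle_trans; [apply Rmin_r| apply Rmin_r]).
  assert (Hc0 : 0 < c) by (unfold c; repeat apply Rmin_glb_lt; lra).
  set (U := Rabs u) in *. set (V := Rabs v) in *. set (Wn := Rabs w) in *.
  assert (EU : u^2 = U^2) by (unfold U; rewrite <- Rsqr_pow2, <- Rsqr_pow2; apply Rsqr_abs).
  assert (EV : v^2 = V^2) by (unfold V; rewrite <- Rsqr_pow2, <- Rsqr_pow2; apply Rsqr_abs).
  assert (EW : w^2 = Wn^2) by (unfold Wn; rewrite <- Rsqr_pow2, <- Rsqr_pow2; apply Rsqr_abs).
  rewrite EU, EV, EW in *.
  set (p := Kx^2 / (2*a0)) in *. set (q := B * C1^2 / (2*g)) in *.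
  assert (A1 : Kx * (U * V) <= (a0/2) * U^2 + p * V^2).
  { assert (H := amgm U (Kx * V) a0 Ha). unfold p.
    replace (Kx^2 / (2*a0) * V^2) with (1/(2*a0) * (Kx * V)^2) by (field; lra). nra. }
  assert (A2 : B * (C1 * (Wn * V)) <= B * (g/2) * V^2 + q * Wn^2).
  { assert (H := amgm V (C1 * Wn) g Hg). unfold q.
    replace (B * C1^2 / (2*g) * Wn^2) with (B * (1/(2*g) * (C1 * Wn)^2)) by (field; lra).
    replace (C1 * (Wn * V)) with (V * (C1 * Wn)) by ring.
    replace (B * (g/2) * V^2) with (B * (g/2 * V^2)) by ring.
    rewrite <- Rmult_plus_distr_l. apply Rmult_le_compat_l; lra. }
  assert (P1 : 0 <= V^2) by apply pow2_ge_0.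
  assert (P2 : 0 <= Wn^2) by apply pow2_ge_0.
  assert (P3 : 0 <= U^2) by apply pow2_ge_0.
  assert (F1 : p * V^2 <= B * g / 4 * V^2) by (apply Rmult_le_compat_r; auto).
  assert (F2 : q * Wn^2 <= A * k / 2 * Wn^2) by (apply Rmult_le_compat_r; auto).
  assert (G1 : c * U^2 <= a0 * U^2) by (apply Rmult_le_compat_r; auto).
  assert (G2 : c * (B * V^2) <= (g/2) * (B * V^2)) by (apply Rmult_le_compat_r; auto; nra).
  assert (G3 : c * (A * Wn^2) <= k * (A * Wn^2)) by (apply Rmult_le_compat_r; auto; nra).
  assert (H5' : B * (v * dv) <= B * (C1 * (Wn * V) - g * V^2)) by (apply Rmult_le_compat_l; [lra| exact H4]).
  assert (H6' : A * (w * dw) <= A * (- k * Wn^2)) by (apply Rmult_le_compat_l; [lra|exact H5]).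
  lra.
Qed.

Lemma cplus (f g : R -> R) s : continuous f s -> continuous g s -> continuous (fun t => f t + g t) s.
Proof. apply (@continuous_plus R_UniformSpace R_AbsRing R_NormedModule). Qed.
Lemma cmult (f g : R -> R) s : continuous f s -> continuous g s -> continuous (fun t => f t * g t) s.
Proof. apply (@continuous_mult R_UniformSpace R_AbsRing). Qed.
Lemma cconst (k : R) s : continuous (fun _ : R => k) s.
Proof. apply (@continuous_const R_UniformSpace R_UniformSpace). Qed.
Lemma cminus (f g : R -> R) s : continuous f s -> continuous g s -> continuous (fun t => f t - g t) s.
Proof. apply (@continuous_minus R_UniformSpace R_AbsRing R_NormedModule). Qed.
Lemma ccomp (f g : R -> R) s : continuous f s -> (forall z, ex_derive g z) -> continuous (fun t => g (f t)) s.
Proof.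
  intros Hf Hg. apply (continuous_comp f g). auto.
  apply (@ex_derive_continuous R_AbsRing R_NormedModule). auto.
Qed.
Lemma cpow2 (f : R -> R) s : continuous f s -> continuous (fun t => (f t)^2) s.
Proof. intros Hf. apply (ccomp f (fun z => z^2)); auto. intros; auto_derive; auto. Qed.
Lemma cexp (k : R) s : continuous (fun t => exp (k * t)) s.
Proof. apply (@ex_derive_continuous R_AbsRing R_NormedModule). auto_derive; auto. Qed.
Lemma cid s : continuous (fun t : R => t) s.
Proof. apply (@continuous_id R_UniformSpace). Qed.

Definition D2 (x0 : R) (x h n : R -> R) (t : R) := (x t - x0)^2 + (h t - 1)^2 + (n t)^2.

Lemma ball_abs a b c r : 0 < r -> a^2 + b^2 + c^2 < r^2 -> Rabs a < r /\ Rabs b < r /\ Rabs c < r.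
Proof.
  intros Hr H. assert (Hsq : forall z, z^2 < r^2 -> Rabs z < r).
  { intros z Hz. destruct (Rlt_dec (Rabs z) r); auto. exfalso.
    assert (z^2 = (Rabs z)^2) by (rewrite <- !Rsqr_pow2; apply Rsqr_abs). nra. }
  generalize (pow2_ge_0 a) (pow2_ge_0 b) (pow2_ge_0 c); intros.
  split; [|split]; apply Hsq; lra.
Qed.

Lemma lyap_core (F1 F2 F3 : R -> R -> R -> R) x0 rho a0 g k Kx C1 :
  0 < rho -> 0 < a0 -> 0 < g -> 0 < k -> 0 <= Kx -> 0 <= C1 ->
  (forall a b c, (a - x0)^2 + (b - 1)^2 + c^2 < rho^2 ->
     (a - x0) * F1 a b c <= - a0 * (a - x0)^2 + Kx * (Rabs (a - x0) * Rabs (b - 1)) /\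
     (b - 1) * F2 a b c <= C1 * (Rabs c * Rabs (b - 1)) - g * (b - 1)^2 /\
     c * F3 a b c <= - k * c^2) ->
  exists cc K, 0 < cc /\ 1 <= K /\ forall T (x h n : R -> R),
    (forall t, 0 <= t < T -> continuous x t /\ continuous h t /\ continuous n t) ->
    (forall t, 0 <= t < T -> D2 x0 x h n t < rho^2 ->
       is_derive x t (F1 (x t) (h t) (n t)) /\ is_derive h t (F2 (x t) (h t) (n t)) /\
       is_derive n t (F3 (x t) (h t) (n t))) ->
    D2 x0 x h n 0 < rho^2 / K ->
    forall t, 0 <= t < T -> D2 x0 x h n t < rho^2 /\ D2 x0 x h n t <= K * D2 x0 x h n 0 * exp (- cc * t).
Proof.
  intros Hr Ha Hg Hk HK HC HF.
  set (B := 2 * Kx^2 / (a0 * g) + 1). set (A := B * C1^2 / (g * k) + 1).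
  assert (HB : 1 <= B) by (unfold B; assert (0 <= 2 * Kx^2 / (a0 * g)) by
     (apply Rmult_le_pos; [nra| left; apply Rinv_0_lt_compat; nra]); lra).
  assert (HA : 1 <= A) by (unfold A; assert (0 <= B * C1^2 / (g * k)) by
     (apply Rmult_le_pos; [nra| left; apply Rinv_0_lt_compat; nra]); lra).
  assert (HB2 : Kx^2 / (2*a0) <= B * g / 4).
  { unfold B. replace ((2 * Kx ^ 2 / (a0 * g) + 1) * g / 4) with (Kx^2/(2*a0) + g/4) by (field; lra). lra. }
  assert (HA2 : B * C1^2 / (2*g) <= A * k / 2).
  { unfold A. replace ((B * C1 ^ 2 / (g * k) + 1) * k / 2) with (B * C1^2 / (2*g) + k/2) by (field; lra). lra. }
  set (cc := Rmin a0 (Rmin (g/2) k)).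
  assert (Hc0 : 0 < cc) by (unfold cc; repeat apply Rmin_glb_lt; lra).
  exists cc, (1 + B + A). split; auto. split; [lra|].
  intros T x h n Hcont Hder H0.
  set (W := fun t => (x t - x0)^2 + B * (h t - 1)^2 + A * (n t)^2).
  set (phi := fun t => W t * exp (cc * t)).
  assert (HWd : forall t, D2 x0 x h n t <= W t /\ W t <= (1 + B + A) * D2 x0 x h n t).
  { intros t. unfold W, D2. generalize (pow2_ge_0 (x t - x0)) (pow2_ge_0 (h t - 1)) (pow2_ge_0 (n t)). nra. }
  assert (Hphi0 : phi 0 = W 0) by (unfold phi; rewrite Rmult_0_r, exp_0; ring).
  assert (Hcphi : forall t, 0 <= t < T -> continuous phi t).
  { intros t Ht. destruct (Hcont t Ht) as (C1'&C2'&C3'). unfold phi, W.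
    apply cmult. apply cplus. apply cplus. apply cpow2, cminus; auto; apply cconst.
    apply cmult. apply cconst. apply cpow2, cminus; auto; apply cconst.
    apply cmult. apply cconst. apply cpow2; auto. apply cexp. }
  assert (Hdphi : forall t, 0 <= t < T -> D2 x0 x h n t < rho^2 ->
     exists dp, is_derive phi t dp /\ dp <= 0).
  { intros t Ht Hin. destruct (Hder t Ht Hin) as (D1&D2'&D3).
    exists (exp (cc * t) * (2 * ((x t - x0) * F1 (x t) (h t) (n t) + B * ((h t - 1) * F2 (x t) (h t) (n t))
                 + A * (n t * F3 (x t) (h t) (n t))) + cc * W t)).
    split.
    - unfold phi, W. auto_derive.
      + repeat split; eexists; eauto.
      + replace (Derive (fun x1 => x x1) t) with (F1 (x t) (h t) (n t)) by (symmetry; apply is_derive_unique; auto).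
        replace (Derive (fun x1 => h x1) t) with (F2 (x t) (h t) (n t)) by (symmetry; apply is_derive_unique; auto).
        replace (Derive (fun x1 => n x1) t) with (F3 (x t) (h t) (n t)) by (symmetry; apply is_derive_unique; auto).
        ring.
    - assert (Hl := lyap_alg (x t - x0) (h t - 1) (n t) (F1 (x t) (h t) (n t)) (F2 (x t) (h t) (n t))
          (F3 (x t) (h t) (n t)) a0 g k Kx C1 B A Ha Hg Hk HK HC HB HA HB2 HA2).
      unfold D2 in Hin. destruct (HF _ _ _ Hin) as (J1&J2&J3).
      specialize (Hl J1 J2 J3). fold cc in Hl. 
      assert (0 < exp (cc * t)) by apply exp_pos.
      unfold W. apply Rmult_le_0_l. lra. lra. }
  assert (Hmono : forall s, 0 <= s < T -> (forall t, 0 <= t <= s -> D2 x0 x h n t < rho^2) -> phi s <= W 0).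
  { intros s Hs Hin. rewrite <- Hphi0. apply mono_dec'. lra.
    intros t Ht; apply Hdphi; [lra| apply Hin; lra]. }
  assert (Hin : forall t, 0 <= t < T -> D2 x0 x h n t < rho^2).
  { apply barrier.
    - intros t Ht. destruct (Hcont t Ht) as (C1'&C2'&C3'). unfold D2.
      apply cplus. apply cplus. apply cpow2, cminus; auto; apply cconst.
      apply cpow2, cminus; auto; apply cconst. apply cpow2; auto.
    - apply Rlt_le_trans with (rho^2/(1+B+A)); auto. unfold Rdiv. assert (0 < rho^2) by nra.
      assert (/(1+B+A) <= 1) by (rewrite <- Rinv_1; apply Rinv_le_contravar; lra). nra.
    - intros s Hs Hbef.
      assert (Hp : phi s <= W 0).
      { apply le_at_end. lra. apply Hcphi; lra.
        intros t Ht. apply Hmono. lra. intros t' Ht'. apply Hbef. lra. }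
      destruct (HWd s) as [E1 _]. destruct (HWd 0) as [_ E2].
      assert (W s <= phi s).
      { unfold phi. assert (1 <= exp (cc * s)).
        { rewrite <- exp_0. apply exp_mono'. nra. }
        assert (0 <= W s) by (unfold W; generalize (pow2_ge_0 (x s - x0)) (pow2_ge_0 (h s - 1)) (pow2_ge_0 (n s)); nra).
        nra. }
      assert ((1 + B + A) * D2 x0 x h n 0 < rho^2).
      { apply Rmult_lt_reg_r with (/ (1 + B + A)). apply Rinv_0_lt_compat; lra.
        replace ((1 + B + A) * D2 x0 x h n 0 * / (1 + B + A)) with (D2 x0 x h n 0) by (field; lra).
        exact H0. }
      lra. }
  intros t Ht. split. apply Hin; auto.
  assert (Hp : phi t <= W 0) by (apply Hmono; auto; intros t' Ht'; apply Hin; lra).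
  destruct (HWd t) as [E1 _]. destruct (HWd 0) as [_ E2].
  unfold phi in Hp.
  assert (Hq : W t <= W 0 * exp (- cc * t)).
  { replace (W t) with (W t * exp (cc * t) * exp (- cc * t)).
    apply Rmult_le_compat_r. left; apply exp_pos. auto.
    rewrite Rmult_assoc, <- exp_plus. replace (cc * t + - cc * t) with 0 by ring. rewrite exp_0; ring. }
  assert (0 < exp (- cc * t)) by apply exp_pos.
  nra.
Qed.

Lemma grow_core (n : R -> R) T k : 0 < k -> 0 < n 0 ->
  (forall t, 0 <= t < T -> continuous n t) ->
  (forall t, 0 <= t < T -> 0 < n t -> exists dn, is_derive n t dn /\ k * n t <= dn) ->
  forall t, 0 <= t < T -> n 0 * exp (k * t) <= n t.
Proof.
  intros Hk H0 Hc Hd.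
  set (psi := fun t => - (n t * exp (- k * t))).
  assert (Hpsi0 : psi 0 = - n 0) by (unfold psi; rewrite Rmult_0_r, exp_0; ring).
  assert (Hdpsi : forall t, 0 <= t < T -> 0 < n t -> exists dp, is_derive psi t dp /\ dp <= 0).
  { intros t Ht Hn. destruct (Hd t Ht Hn) as [dn [D1 D2]].
    exists (- (exp (- k * t) * (dn - k * n t))). split.
    - unfold psi. auto_derive. eexists; eauto.
      replace (Derive (fun x => n x) t) with dn by (symmetry; apply is_derive_unique; auto). ring.
    - assert (0 < exp (- k * t)) by apply exp_pos. nra. }
  assert (Hmono : forall s, 0 <= s < T -> (forall t, 0 <= t <= s -> 0 < n t) -> psi s <= - n 0).
  { intros s Hs Hin. rewrite <- Hpsi0. apply mono_dec'. lra.
    intros t Ht; apply Hdpsi; [lra| apply Hin; lra]. }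
  assert (Hcpsi : forall t, 0 <= t < T -> continuous psi t).
  { intros t Ht. unfold psi. apply (ccomp (fun t => n t * exp (- k * t)) (fun z => - z)).
    apply cmult. apply Hc; auto. apply cexp. intros; auto_derive; auto. }
  assert (Hpos : forall t, 0 <= t < T -> - n t < 0).
  { apply barrier.
    - intros t Ht. apply (ccomp n (fun z => - z)). apply Hc; auto. intros; auto_derive; auto.
    - lra.
    - intros s Hs Hbef. assert (Hp : psi s <= - n 0).
      { apply le_at_end. lra. apply Hcpsi; lra.
        intros t Ht. apply Hmono. lra. intros t' Ht'. assert (- n t' < 0) by (apply Hbef; lra). lra. }
      unfold psi in Hp. assert (0 < exp (- k * s)) by apply exp_pos.
      assert (0 < n s * exp (- k * s)) by lra.
      destruct (Rlt_dec 0 (n s)). lra. nra. }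
  intros t Ht. assert (Hp : psi t <= - n 0).
  { apply Hmono; auto. intros t' Ht'. assert (- n t' < 0) by (apply Hpos; lra). lra. }
  unfold psi in Hp.
  replace (n t) with (n t * exp (- k * t) * exp (k * t)).
  apply Rmult_le_compat_r. left; apply exp_pos. lra.
  rewrite Rmult_assoc, <- exp_plus. replace (- k * t + k * t) with 0 by ring. rewrite exp_0; ring.
Qed.

Section M.
End M.

Lemma LB_dS P (Bx : R -> R -> R -> Prop) l : params_pos P -> 0 < l ->
  (forall a b c, Bx a b c -> l <= b) -> LB Bx (fun a b c => b) ->
  LB Bx (fun a b c => dS P b).
Proof.
  intros HP Hl Hb Hp. unfold dS, Rdiv.
  assert (HR : LB Bx (fun a b c => Rpower b (m P))) by (apply (LB_Rpower Bx (fun a b c => b) (m P) l); auto).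
  apply LB_mult. apply LB_mult. apply LB_const. auto.
  apply LB_inv with (m := Rpower (h50 P) (m P)). apply exp_pos.
  apply LB_plus. apply LB_const. auto.
  intros a b c _. generalize (exp_pos (m P * ln b)). unfold Rpower. lra.
Qed.

Definition Bx (xs rho : R) := box (xs - rho) (xs + rho) (1 - rho) (1 + rho) (- rho) rho.

Ltac lbt xs rho := repeat first [ assumption | apply (LB_p1 (xs - rho) (xs + rho) (1 - rho) (1 + rho) (- rho) rho)
  | apply (LB_p2 (xs - rho) (xs + rho) (1 - rho) (1 + rho) (- rho) rho)
  | apply (LB_p3 (xs - rho) (xs + rho) (1 - rho) (1 + rho) (- rho) rho)
  | apply LB_const | apply LB_minus | apply LB_plus | apply LB_mult | apply LB_opp ].

Lemma LB_all P xs rho : params_pos P -> 0 < rho <= 1/2 -> eta P * rho <= 1/2 ->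
  LB (Bx xs rho) (fun a b c => fx P a b c) /\ LB (Bx xs rho) (fun a b c => fh P a b c) /\
  LB (Bx xs rho) (fun a b c => fn P a b c) /\ LB (Bx xs rho) (fun a b c => Dfun P b a) /\
  LB (Bx xs rho) (fun a b c => alpha P * (1 + beta P * a) * G P b).
Proof.
  intros HP Hr He. unfold Bx.
  assert (HP' := HP). destruct HP' as (H1&H2&H3&H4&H5&H6&H7&H8&H9&H10&H11&H12&H13&H14&H15&H16&H17).
  set (B := box (xs - rho) (xs + rho) (1 - rho) (1 + rho) (- rho) rho).
  assert (Hb : forall a b c, B a b c -> 1/2 <= b) by (intros a b c (_&Hb&_); lra).
  assert (Hp2 : LB B (fun a b c => b)) by apply LB_p2.
  assert (HdS : LB B (fun a b c => dS P b)) by (apply LB_dS with (l := 1/2); auto; lra).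
  assert (HS : LB B (fun a b c => S P b)).
  { unfold S, Rdiv. lbt xs rho; auto. apply LB_inv with (m := 1). lra. lbt xs rho.
    apply (LB_exp B (fun a b c => - lam P * (b - hc P))). lbt xs rho.
    intros. generalize (exp_pos (- lam P * (b - hc P))). lra. }
  assert (Hmu : LB B (fun a b c => mu P b)).
  { unfold mu. lbt xs rho. apply (LB_Rpower B (fun a b c => b) (p P) (1/2)); auto. lra. }
  assert (HG : LB B (fun a b c => G P b)).
  { unfold G, Rdiv. lbt xs rho. apply LB_inv with (m := Kg P). lra. lbt xs rho.
    intros. generalize (Hb a b c H); lra. }
  assert (HGam : LB B (fun a b c => Gam P c)).
  { unfold Gam, Rdiv. lbt xs rho. apply LB_inv with (m := 1/2). lra. lbt xs rho.
    intros a b c (_&_&Hc). assert (eta P * c >= - (eta P * rho)) by nra. lra. }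
  assert (HD : LB B (fun a b c => Dfun P b a)).
  { unfold Dfun. lbt xs rho; auto. }
  split; [|split; [|split; [|split]]].
  - unfold fx. lbt xs rho; auto.
  - unfold fh. lbt xs rho; auto.
  - unfold fn. lbt xs rho; auto.
  - auto.
  - lbt xs rho; auto.
Qed.

Lemma mu1 P : mu P 1 = mu0 P.
Proof. unfold mu, Rpower. rewrite ln_1, Rmult_0_r, exp_0. ring. Qed.

Lemma a0_neg P xs : params_pos P -> 0 < xs < 1 ->
  xs * (1 - xs) * S P 1 + mu0 P * (1 - xs) - nu P * xs = 0 ->
  (1 - 2 * xs) * S P 1 - mu0 P - nu P < 0.
Proof.
  intros HP Hx Heq. destruct HP as (H1&H2&H3&H4&H5&H6&H7&H8&H9&H10&H11&_).
  set (S1 := S P 1) in *. set (a := (1 - 2 * xs) * S1 - mu0 P - nu P).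
  assert (E0 : a * xs = - mu0 P - S1 * xs^2 + (xs * (1 - xs) * S1 + mu0 P * (1 - xs) - nu P * xs)) by (unfold a; ring).
  assert (E1 : a * (1 - xs) = - nu P + S1 * (1 - xs)^2 - (xs * (1 - xs) * S1 + mu0 P * (1 - xs) - nu P * xs)) by (unfold a; ring).
  rewrite Heq in E0, E1.
  destruct (Rle_dec 0 S1).
  - assert (0 <= xs^2) by apply pow2_ge_0. assert (0 <= S1 * xs^2) by (apply Rmult_le_pos; auto).
    assert (a * xs < 0) by lra. destruct (Rlt_dec a 0); auto. exfalso. assert (0 <= a * xs) by (apply Rmult_le_pos; lra). lra.
  - assert (0 <= (1 - xs)^2) by apply pow2_ge_0. assert (S1 * (1 - xs)^2 <= 0) by nra.
    assert (a * (1 - xs) < 0) by lra. destruct (Rlt_dec a 0); auto. exfalso. assert (0 <= a * (1 - xs)) by (apply Rmult_le_pos; lra). lra.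
Qed.

Lemma fx_h1 P xs a c : xs * (1 - xs) * S P 1 + mu0 P * (1 - xs) - nu P * xs = 0 ->
  fx P a 1 c = ((1 - 2 * xs) * S P 1 - mu0 P - nu P) * (a - xs) - S P 1 * (a - xs)^2.
Proof.
  intros Heq. unfold fx. rewrite mu1. set (S1 := S P 1) in *.
  transitivity (((1 - 2 * xs) * S1 - mu0 P - nu P) * (a - xs) - S1 * (a - xs)^2 + (xs * (1 - xs) * S1 + mu0 P * (1 - xs) - nu P * xs)).
  ring. rewrite Heq; ring.
Qed.

Lemma LB_sub xs r r0 f : r <= r0 -> LB (Bx xs r0) f -> LB (Bx xs r) f.
Proof.
  intros Hr [K [M [HK [Hb Hl]]]]. exists K, M. split; auto.
  assert (Hin : forall a b c, Bx xs r a b c -> Bx xs r0 a b c).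
  { unfold Bx, box. intros a b c (A1&A2&A3). lra. }
  split; intros; auto.
Qed.

Definition cl (l u z : R) := Rmax l (Rmin u z).

Lemma cl_in l u z : l <= u -> l <= cl l u z <= u.
Proof. intros. unfold cl, Rmax, Rmin. repeat destruct Rle_dec; lra. Qed.

Lemma cl_id l u z : l <= z <= u -> cl l u z = z.
Proof. intros. unfold cl, Rmax, Rmin. repeat destruct Rle_dec; lra. Qed.

Lemma cl_lip l u z z' : l <= u -> Rabs (cl l u z - cl l u z') <= Rabs (z - z').
Proof. intros. unfold cl, Rmax, Rmin. repeat destruct Rle_dec; unfold Rabs; repeat destruct Rcase_abs; lra. Qed.

Definition clF xs r (f : R -> R -> R -> R) a b c :=
  f (cl (xs - r) (xs + r) a) (cl (1 - r) (1 + r) b) (cl (- r) r c).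

Lemma LB_glob xs r f : 0 < r -> LB (Bx xs r) f ->
  exists K M, 0 <= K /\ 0 <= M /\ (forall a b c, Rabs (clF xs r f a b c) <= M) /\
    (forall a b c a' b' c', Rabs (clF xs r f a b c - clF xs r f a' b' c') <=
        K * (Rabs (a - a') + Rabs (b - b') + Rabs (c - c'))).
Proof.
  intros Hr [K [M [HK [Hb Hl]]]].
  assert (Hin : forall a b c, Bx xs r (cl (xs - r) (xs + r) a) (cl (1 - r) (1 + r) b) (cl (- r) r c)).
  { intros. unfold Bx, box. split; [|split]; apply cl_in; lra. }
  exists K, (Rabs M). split; auto. split. apply Rabs_pos. split.
  - intros. unfold clF. eapply Rle_trans. apply Hb, Hin. apply Rle_abs.
  - intros. unfold clF. eapply Rle_trans. apply Hl; apply Hin.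
    apply Rmult_le_compat_l; auto.
    generalize (cl_lip (xs - r) (xs + r) a a') (cl_lip (1 - r) (1 + r) b b') (cl_lip (- r) r c c'). intros.
    assert (Rabs (cl (xs - r) (xs + r) a - cl (xs - r) (xs + r) a') <= Rabs (a - a')) by (apply H; lra).
    assert (Rabs (cl (1 - r) (1 + r) b - cl (1 - r) (1 + r) b') <= Rabs (b - b')) by (apply H0; lra).
    assert (Rabs (cl (- r) r c - cl (- r) r c') <= Rabs (c - c')) by (apply H1; lra).
    lra.
Qed.

Lemma clF_id xs r f a b c : Bx xs r a b c -> clF xs r f a b c = f a b c.
Proof. unfold Bx, box, clF. intros (A1&A2&A3). rewrite !cl_id; auto. Qed.

Lemma setup P xs : params_pos P -> 0 < xs < 1 ->
  xs * (1 - xs) * S P 1 + mu0 P * (1 - xs) - nu P * xs = 0 ->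
  0 < Dfun P 1 xs -> r P <> Dfun P 1 xs ->
  exists rho, 0 < rho /\
   (forall a b c, (a - xs)^2 + (b - 1)^2 + c^2 < rho^2 -> Bx xs rho a b c) /\
   (r P < Dfun P 1 xs -> exists a0 g k Kx C1, 0 < a0 /\ 0 < g /\ 0 < k /\ 0 <= Kx /\ 0 <= C1 /\
      forall a b c, (a - xs)^2 + (b - 1)^2 + c^2 < rho^2 ->
       (a - xs) * fx P a b c <= - a0 * (a - xs)^2 + Kx * (Rabs (a - xs) * Rabs (b - 1)) /\
       (b - 1) * fh P a b c <= C1 * (Rabs c * Rabs (b - 1)) - g * (b - 1)^2 /\
       c * fn P a b c <= - k * c^2) /\
   (r P > Dfun P 1 xs -> exists k, 0 < k /\
      forall a b c, (a - xs)^2 + (b - 1)^2 + c^2 < rho^2 -> 0 < c -> k * c <= fn P a b c) /\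
   (forall y1 y2 y3, exists x h n : R -> R, x 0 = y1 /\ h 0 = y2 /\ n 0 = y3 /\
      forall t, continuous x t /\ continuous h t /\ continuous n t /\
        (Bx xs rho (x t) (h t) (n t) -> is_derive x t (fx P (x t) (h t) (n t)) /\
           is_derive h t (fh P (x t) (h t) (n t)) /\ is_derive n t (fn P (x t) (h t) (n t)))).
Proof.
  intros HP Hx Heq HD Hne.
  assert (HP' := HP). destruct HP' as (H1&H2&H3&H4&H5&H6&H7&H8&H9&H10&H11&H12&H13&H14&H15&H16&H17).
  set (rho0 := / (2 * (eta P + 1))).
  assert (Hr0 : 0 < rho0 <= 1/2).
  { unfold rho0. split. apply Rinv_0_lt_compat; lra.
    replace (1/2) with (/2) by field. apply Rinv_le_contravar; lra. }
  assert (Her0 : eta P * rho0 <= 1/2).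
  { unfold rho0. apply Rmult_le_reg_r with (2 * (eta P + 1)). lra.
    rewrite Rmult_assoc, Rinv_l by lra. lra. }
  destruct (LB_all P xs rho0 HP Hr0 Her0) as (LBx&LBh&LBn&LBD&LBC).
  assert (LBx' := LBx).
  destruct LBx as [Kx [Mx [HKx [_ Lx]]]].
  destruct LBD as [KD [MD [HKD [_ LD]]]].
  destruct LBC as [KC [MC [HKC [BC _]]]].
  set (S1 := S P 1). set (a0 := (1 - 2 * xs) * S1 - mu0 P - nu P).
  assert (Ha0 : a0 < 0) by (apply a0_neg; auto).
  set (D1 := Dfun P 1 xs) in *.
  set (k := Rabs (r P - D1) / 2).
  assert (Hk : 0 < k) by (unfold k; assert (r P - D1 <> 0) by lra; apply Rabs_pos_lt in H; lra).
  set (rho := Rmin rho0 (Rmin ((- a0 / 2) / (Rabs S1 + 1)) (k / (r P + 3 * KD + 1)))).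
  assert (Hrho1 : rho <= rho0) by apply Rmin_l.
  assert (Hrho2 : rho <= (- a0 / 2) / (Rabs S1 + 1)) by (eapply Rle_trans; [apply Rmin_r| apply Rmin_l]).
  assert (Hrho3 : rho <= k / (r P + 3 * KD + 1)) by (eapply Rle_trans; [apply Rmin_r| apply Rmin_r]).
  assert (Hrho : 0 < rho).
  { unfold rho. repeat apply Rmin_glb_lt. lra.
    apply Rdiv_lt_0_compat. lra. generalize (Rabs_pos S1); lra.
    apply Rdiv_lt_0_compat. lra. lra. }
  assert (Hrho2' : (Rabs S1 + 1) * rho <= - a0 / 2).
  { apply Rmult_le_reg_r with (/ (Rabs S1 + 1)). apply Rinv_0_lt_compat; generalize (Rabs_pos S1); lra.
    replace ((Rabs S1 + 1) * rho * / (Rabs S1 + 1)) with rho by (field; generalize (Rabs_pos S1); lra). auto. }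
  assert (Hrho3' : (r P + 3 * KD + 1) * rho <= k).
  { apply Rmult_le_reg_r with (/ (r P + 3 * KD + 1)). apply Rinv_0_lt_compat; lra.
    replace ((r P + 3 * KD + 1) * rho * / (r P + 3 * KD + 1)) with rho by (field; lra). auto. }
  assert (Hball : forall a b c, (a - xs)^2 + (b - 1)^2 + c^2 < rho^2 -> Bx xs rho a b c).
  { intros a b c Hin. destruct (ball_abs (a - xs) (b - 1) c rho Hrho Hin) as (A1&A2&A3).
    apply Rabs_lt_between' in A1. apply Rabs_lt_between' in A2. apply Rabs_lt_between in A3.
    unfold Bx, box. lra. }
  assert (Hsub : forall a b c, Bx xs rho a b c -> Bx xs rho0 a b c).
  { unfold Bx, box. intros a b c (A1&A2&A3). lra. }
  assert (Hq : forall a b c, (a - xs)^2 + (b - 1)^2 + c^2 < rho^2 ->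
     Rabs ((r P * (1 - c) - Dfun P b a) - (r P - D1)) <= k).
  { intros a b c Hin. destruct (ball_abs (a - xs) (b - 1) c rho Hrho Hin) as (A1&A2&A3).
    assert (HB0 : Bx xs rho0 xs 1 0) by (unfold Bx, box; lra).
    specialize (LD a b c xs 1 0 (Hsub _ _ _ (Hball _ _ _ Hin)) HB0). unfold D1.
    replace (c - 0) with c in LD by ring.
    replace (r P * (1 - c) - Dfun P b a - (r P - Dfun P 1 xs)) with (- (r P * c) - (Dfun P b a - Dfun P 1 xs)) by ring.
    eapply Rle_trans. apply Rabs_triang. rewrite Rabs_Ropp, Rabs_Ropp, Rabs_mult, (Rabs_pos_eq (r P)) by lra.
    assert (r P * Rabs c <= r P * rho) by (apply Rmult_le_compat_l; lra).
    assert (KD * (Rabs (a - xs) + Rabs (b - 1) + Rabs c) <= KD * (3 * rho)) by (apply Rmult_le_compat_l; lra).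
    lra. }
  exists rho. split; auto. split; auto. split; [|split].
  -
    intros Hlt. exists (- a0 / 2), (gamma0 P / 2), k, Kx, (Rabs MC).
    split; [lra|]. split; [lra|]. split; auto. split; auto. split; [apply Rabs_pos|].
    intros a b c Hin. assert (Hbx := Hball _ _ _ Hin).
    destruct (ball_abs (a - xs) (b - 1) c rho Hrho Hin) as (A1&A2&A3).
    split; [|split].
    + assert (HB1 : Bx xs rho0 a 1 c) by (apply Hsub; unfold Bx, box in *; lra).
      specialize (Lx a b c a 1 c (Hsub _ _ _ Hbx) HB1).
      replace (a - a) with 0 in Lx by ring. replace (c - c) with 0 in Lx by ring. rewrite Rabs_R0 in Lx.
      rewrite (fx_h1 P xs a c Heq) in Lx. fold S1 a0 in Lx.
      set (u := a - xs) in *. set (v := b - 1) in *. set (d := fx P a b c - (a0 * u - S1 * u^2)) in *.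
      replace (fx P a b c) with (a0 * u - S1 * u^2 + d) by (unfold d; ring).
      assert (E1 : u * d <= Kx * (Rabs u * Rabs v)).
      { eapply Rle_trans. apply Rle_abs. rewrite Rabs_mult.
        replace (Kx * (Rabs u * Rabs v)) with (Rabs u * (Kx * (0 + Rabs v + 0))) by ring.
        apply Rmult_le_compat_l. apply Rabs_pos. auto. }
      assert (E2 : - S1 * u <= Rabs S1 * rho).
      { eapply Rle_trans. apply Rle_abs. rewrite Rabs_mult, Rabs_Ropp.
        apply Rmult_le_compat_l. apply Rabs_pos. lra. }
      assert (E3 : - S1 * u * u^2 <= Rabs S1 * rho * u^2) by (apply Rmult_le_compat_r; [apply pow2_ge_0| auto]).
      assert (E4 : Rabs S1 * rho * u^2 <= (- a0 / 2) * u^2).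
      { apply Rmult_le_compat_r. apply pow2_ge_0. assert (0 <= rho) by lra. nra. }
      replace (u * (a0 * u - S1 * u ^ 2 + d)) with (a0 * u^2 + (- S1 * u * u^2) + u * d) by ring.
      replace (- (- a0 / 2) * u ^ 2) with (a0 * u^2 + (- a0/2) * u^2) by field. lra.
    + unfold fh. set (v := b - 1) in *.
      specialize (BC a b c (Hsub _ _ _ Hbx)).
      set (co := alpha P * (1 + beta P * a) * G P b) in *.
      replace (v * (alpha P * c * (1 + beta P * a) * G P b - Gam P c * v))
        with (v * c * co - Gam P c * v^2) by (unfold co; ring).
      assert (E1 : v * c * co <= Rabs MC * (Rabs c * Rabs v)).
      { eapply Rle_trans. apply Rle_abs. rewrite !Rabs_mult.
        replace (Rabs MC * (Rabs c * Rabs v)) with (Rabs v * Rabs c * Rabs MC) by ring.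
        apply Rmult_le_compat_l. apply Rmult_le_pos; apply Rabs_pos.
        eapply Rle_trans. apply BC. apply Rle_abs. }
      assert (E2 : gamma0 P / 2 <= Gam P c).
      { unfold Gam. assert (eta P * Rabs c <= eta P * rho0) by (apply Rmult_le_compat_l; lra).
        assert (Rabs (eta P * c) <= 1/2) by (rewrite Rabs_mult, (Rabs_pos_eq (eta P)); lra).
        apply Rabs_le_between in H0.
        unfold Rdiv. apply Rmult_le_compat_l. lra. apply Rinv_le_contravar; lra. }
      assert (E3 : gamma0 P / 2 * v^2 <= Gam P c * v^2) by (apply Rmult_le_compat_r; [apply pow2_ge_0| auto]).
      lra.
    + unfold fn. specialize (Hq a b c Hin).
      apply Rabs_le_between in Hq.
      assert (Ek : r P - D1 = - (2 * k)).
      { unfold k. rewrite Rabs_left by lra. field. }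
      replace (c * (r P * c * (1 - c) - Dfun P b a * c)) with (c^2 * (r P * (1 - c) - Dfun P b a)) by ring.
      assert (0 <= c^2) by apply pow2_ge_0.
      replace (- k * c^2) with (c^2 * (- k)) by ring.
      apply Rmult_le_compat_l; auto. lra.
  -
    intros Hgt. exists k. split; auto. intros a b c Hin Hc. unfold fn.
    specialize (Hq a b c Hin). apply Rabs_le_between in Hq.
    assert (Ek : r P - D1 = 2 * k).
    { unfold k. rewrite Rabs_pos_eq by lra. field. }
    replace (r P * c * (1 - c) - Dfun P b a * c) with (c * (r P * (1 - c) - Dfun P b a)) by ring.
    rewrite (Rmult_comm k). apply Rmult_le_compat_l; lra.
  -
    intros y1 y2 y3.
    destruct (LB_glob xs rho _ Hrho (LB_sub xs rho rho0 _ Hrho1 LBx')) as [K1 [M1 [HK1 [HM1 [B1 L1]]]]].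
    destruct (LB_glob xs rho _ Hrho (LB_sub xs rho rho0 _ Hrho1 LBh)) as [K2 [M2 [HK2 [HM2 [B2 L2]]]]].
    destruct (LB_glob xs rho _ Hrho (LB_sub xs rho rho0 _ Hrho1 LBn)) as [K3 [M3 [HK3 [HM3 [B3 L3]]]]].
    assert (Hd : forall a b c a' b' c', 0 <= Rabs (a - a') + Rabs (b - b') + Rabs (c - c')) by (intros; apply dpos).
    destruct (exist3 (clF xs rho (fun a b c => fx P a b c)) (clF xs rho (fun a b c => fh P a b c))
       (clF xs rho (fun a b c => fn P a b c)) (M1 + M2 + M3) (K1 + K2 + K3 + 1)) with (y1 := y1) (y2 := y2) (y3 := y3)
       as [x [h [n [E1 [E2 [E3 Hder]]]]]].
    + lra.
    + lra.
    + intros a b c; specialize (B1 a b c); lra.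
    + intros a b c; specialize (B2 a b c); lra.
    + intros a b c; specialize (B3 a b c); lra.
    + intros. eapply Rle_trans. apply L1. apply Rmult_le_compat_r. apply Hd. lra.
    + intros. eapply Rle_trans. apply L2. apply Rmult_le_compat_r. apply Hd. lra.
    + intros. eapply Rle_trans. apply L3. apply Rmult_le_compat_r. apply Hd. lra.
    + exists x, h, n. split; auto. split; auto. split; auto. intros t.
      destruct (Hder t) as (D1'&D2'&D3').
      split. apply (@ex_derive_continuous R_AbsRing R_NormedModule). eexists; eauto.
      split. apply (@ex_derive_continuous R_AbsRing R_NormedModule). eexists; eauto.
      split. apply (@ex_derive_continuous R_AbsRing R_NormedModule). eexists; eauto.
      intros Hb. rewrite (clF_id xs rho _ _ _ _ Hb) in D1'. rewrite (clF_id xs rho _ _ _ _ Hb) in D2'. rewrite (clF_id xs rho _ _ _ _ Hb) in D3'. auto.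
Qed.

Lemma dist3_D2 (x h n : R -> R) xs t : dist3 (x t) (h t) (n t) xs 1 0 = sqrt (D2 xs x h n t).
Proof. unfold dist3, D2. rewrite Rminus_0_r. reflexivity. Qed.

Lemma D2_nonneg xs x h n t : 0 <= D2 xs x h n t.
Proof. unfold D2. generalize (pow2_ge_0 (x t - xs)) (pow2_ge_0 (h t - 1)) (pow2_ge_0 (n t)); lra. Qed.

Lemma sqrt_lt_sq a e : 0 <= a -> sqrt a < e -> a < e^2.
Proof.
  intros Ha H. assert (0 <= sqrt a) by apply sqrt_pos.
  rewrite <- (sqrt_sqrt a Ha). nra.
Qed.

Lemma sq_lt_sqrt a e : 0 <= a -> 0 < e -> a < e^2 -> sqrt a < e.
Proof.
  intros Ha He H. destruct (Rlt_dec (sqrt a) e); auto. exfalso.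
  assert (0 <= sqrt a) by apply sqrt_pos.
  rewrite <- (sqrt_sqrt a Ha) in H. nra.
Qed.

Lemma lim_exp (f : R -> R) l C cc : 0 < cc -> 0 <= C ->
  (forall t, 0 <= t -> (f t - l)^2 <= C * exp (- cc * t)) -> is_lim f p_infty l.
Proof.
  intros Hcc HC H. apply is_lim_spec. intros eps. simpl.
  assert (He : 0 < eps) by apply cond_pos.
  set (q := eps^2 / (C + 1)).
  assert (Hq : 0 < q) by (unfold q; apply Rdiv_lt_0_compat; nra).
  exists (Rmax 0 (- ln q / cc)). intros t Ht.
  assert (Ht0 : 0 <= t) by (assert (0 <= Rmax 0 (- ln q / cc)) by apply Rmax_l; lra).
  assert (Ht1 : - ln q / cc < t) by (assert (- ln q / cc <= Rmax 0 (- ln q / cc)) by apply Rmax_r; lra).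
  assert (Hexp : exp (- cc * t) < q).
  { rewrite <- (exp_ln q Hq). apply exp_increasing.
    apply Rmult_lt_compat_l with (r := cc) in Ht1; auto.
    replace (cc * (- ln q / cc)) with (- ln q) in Ht1 by (field; lra). lra. }
  specialize (H t Ht0).
  assert (Hb : (f t - l)^2 < eps^2).
  { assert (0 < exp (- cc * t)) by apply exp_pos.
    apply Rle_lt_trans with ((C + 1) * exp (- cc * t)). nra.
    apply Rlt_le_trans with ((C + 1) * q). apply Rmult_lt_compat_l; lra.
    unfold q. right; field; lra. }
  destruct (Rlt_dec (Rabs (f t - l)) eps); auto. exfalso.
  assert ((f t - l)^2 = (Rabs (f t - l))^2) by (rewrite <- !Rsqr_pow2; apply Rsqr_abs).
  nra.
Qed.

Lemma sol_cont P T x h n : sol_on P T x h n -> forall t, 0 <= t < T ->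
  continuous x t /\ continuous h t /\ continuous n t.
Proof.
  intros Hs t Ht. destruct (Hs t Ht) as (D1&D2'&D3).
  split. apply (@ex_derive_continuous R_AbsRing R_NormedModule). eexists; eauto.
  split. apply (@ex_derive_continuous R_AbsRing R_NormedModule). eexists; eauto.
  apply (@ex_derive_continuous R_AbsRing R_NormedModule). eexists; eauto.
Qed.

Theorem theorem2 (P : params) (xs : R) :
  params_pos P ->
  0 < xs < 1 ->
  xs * (1 - xs) * S P 1 + mu0 P * (1 - xs) - nu P * xs = 0 ->
  0 < Dfun P 1 xs ->
  (Rnum0 P xs < 1 -> loc_asymp_stable P xs 1 0) /\
  (Rnum0 P xs > 1 -> unstable P xs 1 0).
Proof.
  intros HP Hx Heq HD. split.
  - intros Hlt. unfold Rnum0 in Hlt.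
    assert (Hlt' : r P < Dfun P 1 xs).
    { apply Rmult_lt_compat_r with (r := Dfun P 1 xs) in Hlt; auto.
      unfold Rdiv in Hlt. rewrite Rmult_assoc, Rinv_l, Rmult_1_r in Hlt by lra. lra. }
    destruct (setup P xs HP Hx Heq HD) as [rho [Hr [Hball [Hst [_ Hex]]]]]. lra.
    destruct (Hst Hlt') as [a0 [g [k [Kx [C1 [Ha0 [Hg [Hk [HKx [HC1 HF]]]]]]]]]].
    destruct (lyap_core (fx P) (fh P) (fn P) xs rho a0 g k Kx C1 Hr Ha0 Hg Hk HKx HC1 HF)
      as [cc [K [Hcc [HK Hcore]]]].
    split.
    + intros eps Heps.
      set (m := Rmin (rho^2) (eps^2)).
      assert (Hm : 0 < m) by (unfold m; apply Rmin_glb_lt; nra).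
      exists (sqrt (m / (2 * K))). split. apply sqrt_lt_R0. apply Rdiv_lt_0_compat; lra.
      intros T x h n Hsol H0 t Ht.
      rewrite dist3_D2 in H0. apply sqrt_lt_sq in H0; [|apply D2_nonneg].
      rewrite pow2_sqrt in H0 by (left; apply Rdiv_lt_0_compat; lra).
      assert (Hm1 : m <= rho^2) by apply Rmin_l. assert (Hm2 : m <= eps^2) by apply Rmin_r.
      assert (HD0 : D2 xs x h n 0 < rho^2 / K).
      { eapply Rlt_le_trans. apply H0. unfold Rdiv. rewrite Rinv_mult.
        assert (0 < / K) by (apply Rinv_0_lt_compat; lra). nra. }
      destruct (Hcore T x h n (sol_cont P T x h n Hsol) (fun t Ht _ => Hsol t Ht) HD0 t Ht) as [_ Hb].
      rewrite dist3_D2. apply sq_lt_sqrt. apply D2_nonneg. auto.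
      assert (Hexp : exp (- cc * t) <= 1) by (rewrite <- exp_0; apply exp_mono'; nra).
      assert (0 <= D2 xs x h n 0) by apply D2_nonneg.
      assert (K * D2 xs x h n 0 < m / 2).
      { apply Rmult_lt_compat_l with (r := K) in H0; [|lra].
        replace (K * (m / (2 * K))) with (m / 2) in H0 by (field; lra). auto. }
      assert (K * D2 xs x h n 0 * exp (- cc * t) <= K * D2 xs x h n 0).
      { assert (0 <= K * D2 xs x h n 0) by nra. nra. }
      lra.
    + exists (sqrt (rho^2 / (2 * K))). split. apply sqrt_lt_R0. apply Rdiv_lt_0_compat; nra.
      intros x0 h0 n0 Hd.
      assert (Hd' : (x0 - xs)^2 + (h0 - 1)^2 + n0^2 < rho^2 / K).
      { unfold dist3 in Hd. rewrite Rminus_0_r in Hd. apply sqrt_lt_sq in Hd.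
        rewrite pow2_sqrt in Hd by (left; apply Rdiv_lt_0_compat; nra).
        eapply Rlt_le_trans. apply Hd. unfold Rdiv. rewrite Rinv_mult.
        assert (0 < / K) by (apply Rinv_0_lt_compat; lra). assert (0 < rho^2) by nra. nra.
        generalize (pow2_ge_0 (x0 - xs)) (pow2_ge_0 (h0 - 1)) (pow2_ge_0 n0); lra. }
      split.
      * destruct (Hex x0 h0 n0) as [x [h [n [E1 [E2 [E3 Hxt]]]]]].
        assert (HD0 : D2 xs x h n 0 < rho^2 / K) by (unfold D2; rewrite E1, E2, E3; auto).
        assert (Hin : forall t, 0 <= t -> D2 xs x h n t < rho^2).
        { intros t Ht. 
          refine (proj1 (Hcore (t + 1) x h n _ _ HD0 t _)).
          - intros s _. destruct (Hxt s) as (C1'&C2'&C3'&_). auto.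
          - intros s _ Hs. destruct (Hxt s) as (_&_&_&Hd2). apply Hd2. apply Hball. exact Hs.
          - lra. }
        exists x, h, n. split; auto.
        intros t Ht. destruct (Hxt t) as (_&_&_&Hd2). apply Hd2. apply Hball. apply Hin; auto.
      * intros x h n Hsol E1 E2 E3.
        assert (HD0 : D2 xs x h n 0 < rho^2 / K) by (unfold D2; rewrite E1, E2, E3; auto).
        assert (Hb : forall t, 0 <= t -> D2 xs x h n t <= K * D2 xs x h n 0 * exp (- cc * t)).
        { intros t Ht.
          assert (Hs : sol_on P (t + 1) x h n) by (intros s Hs; apply Hsol; lra).
          refine (proj2 (Hcore (t + 1) x h n (sol_cont P _ x h n Hs) (fun s Hs' _ => Hs s Hs') HD0 t _)). lra. }
        assert (HC : 0 <= K * D2 xs x h n 0) by (apply Rmult_le_pos; [lra| apply D2_nonneg]).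
        split; [|split].
        -- apply (lim_exp x xs (K * D2 xs x h n 0) cc); auto. intros t Ht. specialize (Hb t Ht).
           assert (ED : D2 xs x h n t = (x t - xs)^2 + (h t - 1)^2 + (n t)^2) by reflexivity. generalize (pow2_ge_0 (h t - 1)) (pow2_ge_0 (n t)). lra.
        -- apply (lim_exp h 1 (K * D2 xs x h n 0) cc); auto. intros t Ht. specialize (Hb t Ht).
           assert (ED : D2 xs x h n t = (x t - xs)^2 + (h t - 1)^2 + (n t)^2) by reflexivity. generalize (pow2_ge_0 (x t - xs)) (pow2_ge_0 (n t)). lra.
        -- apply (lim_exp n 0 (K * D2 xs x h n 0) cc); auto. intros t Ht. specialize (Hb t Ht).
           assert (ED : D2 xs x h n t = (x t - xs)^2 + (h t - 1)^2 + (n t)^2) by reflexivity. rewrite Rminus_0_r. generalize (pow2_ge_0 (x t - xs)) (pow2_ge_0 (h t - 1)). lra.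
  - intros Hgt. unfold Rnum0 in Hgt.
    assert (Hgt' : r P > Dfun P 1 xs).
    { apply Rmult_lt_compat_r with (r := Dfun P 1 xs) in Hgt; auto.
      unfold Rdiv in Hgt. rewrite Rmult_assoc, Rinv_l, Rmult_1_r in Hgt by lra. lra. }
    destruct (setup P xs HP Hx Heq HD) as [rho [Hr [Hball [_ [Hun Hex]]]]]. lra.
    destruct (Hun Hgt') as [k [Hk HFu]].
    intros Hls. destruct (Hls (rho / 2)) as [d [Hd Hstab]]. lra.
    set (n0 := Rmin d rho / 2).
    assert (Hn0 : 0 < n0 /\ n0 < d /\ n0 < rho).
    { unfold n0. assert (Rmin d rho <= d) by apply Rmin_l. assert (Rmin d rho <= rho) by apply Rmin_r.
      assert (0 < Rmin d rho) by (apply Rmin_glb_lt; lra). lra. }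
    destruct (Hex xs 1 n0) as [x [h [n [E1 [E2 [E3 Hxt]]]]]].
    assert (HD0 : D2 xs x h n 0 = n0^2) by (unfold D2; rewrite E1, E2, E3; ring).
    assert (Hdist0 : dist3 (x 0) (h 0) (n 0) xs 1 0 < d).
    { rewrite dist3_D2, HD0. rewrite sqrt_pow2; lra. }
    assert (Hin : forall T t, 0 <= t < T -> D2 xs x h n t < rho^2).
    { intros T. apply barrier.
      - intros t _. destruct (Hxt t) as (C1'&C2'&C3'&_). unfold D2.
        apply cplus. apply cplus. apply cpow2, cminus; auto; apply cconst.
        apply cpow2, cminus; auto; apply cconst. apply cpow2; auto.
      - rewrite HD0. nra.
      - intros s Hs Hbef.
        assert (Hsol : sol_on P s x h n).
        { intros t Ht. destruct (Hxt t) as (_&_&_&Hd2). apply Hd2. apply Hball. apply Hbef; auto. }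
        assert (Hq : D2 xs x h n s <= (rho/2)^2).
        { apply le_at_end. lra.
          destruct (Hxt s) as (C1'&C2'&C3'&_). unfold D2.
          apply cplus. apply cplus. apply cpow2, cminus; auto; apply cconst.
          apply cpow2, cminus; auto; apply cconst. apply cpow2; auto.
          intros t Ht. specialize (Hstab s x h n Hsol Hdist0 t Ht). rewrite dist3_D2 in Hstab.
          apply sqrt_lt_sq in Hstab. lra. apply D2_nonneg. }
        nra. }
    assert (Hgrow : forall t, 0 <= t -> n0 * exp (k * t) <= n t).
    { intros t Ht. rewrite <- E3. apply (grow_core n (t + 1) k); auto.
      - rewrite E3; lra.
      - intros s _. destruct (Hxt s) as (_&_&C3'&_). auto.
      - intros s Hs Hpos. exists (fn P (x s) (h s) (n s)). split.
        + destruct (Hxt s) as (_&_&_&Hd2). apply Hd2. apply Hball. apply (Hin (t + 1)); auto.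
        + apply HFu; auto. apply (Hin (t + 1)); auto.
      - lra. }
    set (t1 := ln (rho / n0) / k).
    assert (Ht1 : 0 <= t1).
    { unfold t1. apply Rmult_le_pos. rewrite <- ln_1. apply ln_le. lra.
      apply Rmult_le_reg_r with n0. lra. unfold Rdiv. rewrite Rmult_assoc, Rinv_l by lra. lra.
      left; apply Rinv_0_lt_compat; lra. }
    specialize (Hgrow t1 Ht1).
    replace (k * t1) with (ln (rho / n0)) in Hgrow by (unfold t1; field; lra).
    rewrite exp_ln in Hgrow by (apply Rdiv_lt_0_compat; lra).
    replace (n0 * (rho / n0)) with rho in Hgrow by (field; lra).
    assert (H1 := Hin (t1 + 1) t1 (conj Ht1 (Rlt_plus_1 t1))).
    unfold D2 in H1. destruct (ball_abs (x t1 - xs) (h t1 - 1) (n t1) rho Hr H1) as (_&_&A3).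
    apply Rabs_lt_between in A3. lra.
Qed.
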